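(* Assume C1 and C3. Let $\overline{E_\lambda}=\sup_{(t,\theta)\in[0,T]\times\Theta}\|E_\theta(t)\|_2$. There exist constants $K_1,K_2,L_1>0$, not depending on $\theta,\theta',t$ or $\lambda$, such that for all $\theta,\theta'\in\Theta$ and $t\in[0,T]$, $$\|E_\theta(t)-E_{\theta'}(t)\|_2\le K_1\overline{E_\lambda}\,e^{L_1\overline{E_\lambda}/\lambda}\|\theta-\theta'\|,$$ and $\overline{E_\lambda}\le K_2e^{L_1/\lambda}$.
   Context: Setting: $T>0$, $C\in\mathbb{R}^{d'\times d}$, $\Theta\subset\mathbb{R}^p$, $\lambda>0$; for $\theta\in\Theta$, $A_\theta(t)\in\mathbb{R}^{d\times d}$. $E_\theta$ solves the Riccati equation $\dot E_\theta=C^TC-A_\theta^TE_\theta-E_\theta A_\theta-\frac1\lambda E_\theta^2$ with $E_\theta(0)=Q$ (symmetric, nonnegative). $\|\cdot\|_2$ is the Frobenius norm. C1: $\Theta$ compact. C3: $(t,\theta)\mapsto A_\theta(t)$ continuous on $[0,T]\times\Theta$ (and, as used, $\theta\mapsto A_\theta$ Lipschitz in $L^2$, e.g. under C4: $\partial A_\theta(t)/\partial\theta$ continuous in $(t,\theta)$). *)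

(* Defs.v *)
From Stdlib Require Import Reals Lra Lia List.
Open Scope R_scope.

Fixpoint rsum (n : nat) (f : nat -> R) : R :=
  match n with O => 0 | S m => rsum m f + f m end.

(* Vectors of R^p: functions nat -> R, only coordinates < p matter.
   Matrices: functions nat -> nat -> R, only entries within the size matter. *)
Definition vec := nat -> R.
Definition Mat := nat -> nat -> R.

Definition vnorm (p : nat) (x : vec) : R := sqrt (rsum p (fun k => (x k) ^ 2)).
Definition vdist (p : nat) (x y : vec) : R := vnorm p (fun k => x k - y k).

Definition mmul (n : nat) (A B : Mat) : Mat :=
  fun i j => rsum n (fun k => A i k * B k j).
Definition trn (A : Mat) : Mat := fun i j => A j i.
Definition madd (A B : Mat) : Mat := fun i j => A i j + B i j.
Definition msub (A B : Mat) : Mat := fun i j => A i j - B i j.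
Definition mscal (c : R) (A : Mat) : Mat := fun i j => c * A i j.

Definition frob (m n : nat) (A : Mat) : R :=
  sqrt (rsum m (fun i => rsum n (fun j => (A i j) ^ 2))).

(* Right-hand side of the Riccati equation
   C^T C - A^T E - E A - (1/lam) E^2, with C : d' x d, A E : d x d. *)
Definition riccati_rhs (d d' : nat) (lam : R) (C A E : Mat) : Mat :=
  msub (msub (msub (mmul d' (trn C) C) (mmul d (trn A) E)) (mmul d E A))
       (mscal (1 / lam) (mmul d E E)).

Definition open_p (p : nat) (U : vec -> Prop) : Prop :=
  forall x, U x -> exists eps, 0 < eps /\ forall y, vdist p x y < eps -> U y.

Definition compact_p (p : nat) (Th : vec -> Prop) : Prop :=
  forall (I : Type) (U : I -> vec -> Prop),
    (forall i, open_p p (U i)) ->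
    (forall x, Th x -> exists i, U i x) ->
    exists l : list I, forall x, Th x -> exists i, In i l /\ U i x.

Definition A_cont (d p : nat) (T : R) (Th : vec -> Prop) (A : vec -> R -> Mat)
  : Prop :=
  forall i j, (i < d)%nat -> (j < d)%nat ->
  forall t th, 0 <= t <= T -> Th th ->
  forall eps, 0 < eps -> exists delta, 0 < delta /\
    forall s th', 0 <= s <= T -> Th th' -> Rabs (s - t) < delta ->
      vdist p th th' < delta -> Rabs (A th' s i j - A th t i j) < eps.

Definition A_L2_lipschitz (d p : nat) (T : R) (Th : vec -> Prop)
  (A : vec -> R -> Mat) : Prop :=
  exists L, 0 <= L /\
    forall th th', Th th -> Th th' ->
    exists pr : Riemann_integrable
                  (fun t => (frob d d (msub (A th t) (A th' t))) ^ 2) 0 T,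
      sqrt (RiemannInt pr) <= L * vdist p th th'.

Definition sym_psd (d : nat) (Q : Mat) : Prop :=
  (forall i j, (i < d)%nat -> (j < d)%nat -> Q i j = Q j i) /\
  (forall x : vec, 0 <= rsum d (fun i => rsum d (fun j => x i * Q i j * x j))).

Definition riccati_sol (d d' : nat) (T lam : R) (C Q : Mat)
  (Ath : R -> Mat) (Eth : R -> Mat) : Prop :=
  (forall i j, (i < d)%nat -> (j < d)%nat -> Eth 0 i j = Q i j) /\
  (forall i j, (i < d)%nat -> (j < d)%nat ->
     forall t, 0 <= t <= T -> forall eps, 0 < eps -> exists delta, 0 < delta /\
       forall s, 0 <= s <= T -> Rabs (s - t) < delta ->
         Rabs (Eth s i j - Eth t i j) < eps) /\
  (forall i j, (i < d)%nat -> (j < d)%nat ->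
     forall t, 0 < t < T ->
       derivable_pt_lim (fun s => Eth s i j) t
         (riccati_rhs d d' lam C (Ath t) (Eth t) i j)).

(* Main.v *)
Require Import Defs.
From Stdlib Require Import Reals Lra Lia List Classical ClassicalEpsilon.
Open Scope R_scope.

Lemma rsum_ext n f g : (forall k, (k < n)%nat -> f k = g k) -> rsum n f = rsum n g.
Proof. induction n; simpl; intros H; auto. rewrite IHn by (intros; apply H; lia). rewrite (H n) by lia; auto. Qed.

Lemma rsum_plus n f g : rsum n (fun k => f k + g k) = rsum n f + rsum n g.
Proof. induction n; simpl; [lra|rewrite IHn; lra]. Qed.
Lemma rsum_minus n f g : rsum n (fun k => f k - g k) = rsum n f - rsum n g.
Proof. induction n; simpl; [lra|rewrite IHn; lra]. Qed.
Lemma rsum_scal n c f : rsum n (fun k => c * f k) = c * rsum n f.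
Proof. induction n; simpl; [lra|rewrite IHn; lra]. Qed.
Lemma rsum_scal_r n c f : rsum n (fun k => f k * c) = rsum n f * c.
Proof. induction n; simpl; [lra|rewrite IHn; lra]. Qed.
Lemma rsum_zero n f : (forall k, (k<n)%nat -> f k = 0) -> rsum n f = 0.
Proof. intros H. rewrite (rsum_ext n f (fun _ => 0)) by auto. induction n; simpl; auto. rewrite IHn by (intros; apply H; lia). lra. Qed.
Lemma rsum_le n f g : (forall k, (k < n)%nat -> f k <= g k) -> rsum n f <= rsum n g.
Proof. induction n; simpl; intros H; [lra|]. pose proof (H n ltac:(lia)). pose proof (IHn ltac:(intros; apply H; lia)). lra. Qed.
Lemma rsum_nonneg n f : (forall k, (k < n)%nat -> 0 <= f k) -> 0 <= rsum n f.
Proof. intros H. replace 0 with (rsum n (fun _ => 0)). apply rsum_le; auto. apply rsum_zero; auto. Qed.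
Lemma rsum_swap n m (f : nat -> nat -> R) :
  rsum n (fun i => rsum m (fun j => f i j)) = rsum m (fun j => rsum n (fun i => f i j)).
Proof. induction n; simpl. symmetry; apply rsum_zero; auto. rewrite IHn, <- rsum_plus. auto. Qed.
Lemma rsum_abs n f : Rabs (rsum n f) <= rsum n (fun k => Rabs (f k)).
Proof. induction n; simpl. rewrite Rabs_R0; lra. eapply Rle_trans. apply Rabs_triang. lra. Qed.
Lemma rsum_prod n m f g :
  rsum n (fun i => rsum m (fun j => f i * g j)) = rsum n f * rsum m g.
Proof. rewrite <- rsum_scal_r. apply rsum_ext; intros. apply rsum_scal. Qed.

Lemma discr (al be ga : R) : (forall s, 0 <= al + 2*be*s + ga*s*s) -> be*be <= al*ga.
Proof.
  intros H. destruct (Rlt_or_le 0 ga) as [Hg|Hg].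
  - specialize (H (-be/ga)). 
    assert (al + 2 * be * (- be / ga) + ga * (- be / ga) * (- be / ga) = al - be*be/ga) by (field; lra).
    rewrite H0 in H. 
    assert (be*be/ga <= al) by lra.
    apply Rmult_le_compat_r with (r:=ga) in H1; [|lra].
    replace (be*be/ga*ga) with (be*be) in H1 by (field; lra). lra.
  - assert (ga = 0 \/ ga < 0) as [Hg0|Hg0] by lra.
    + subst. destruct (Req_dec be 0). subst. pose proof (H 0). nra.
      exfalso. pose proof (H (-(Rabs al + 1)/(2*be))).
      assert (2*be*(-(Rabs al + 1)/(2*be)) = -(Rabs al+1)) by (field; auto).
      rewrite H2 in H1. pose proof (Rle_abs al). nra.
    + exfalso. pose proof (H ((Rabs al + 2*Rabs be + 1)/(-ga) + 1)).
      set (s := (Rabs al + 2*Rabs be + 1)/(-ga) + 1) in *.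
      assert (-ga * (s-1) = Rabs al + 2*Rabs be + 1) by (unfold s; field; lra).
      assert (s >= 1). { unfold s. assert (0 <= (Rabs al + 2 * Rabs be + 1) / - ga).
        apply Rle_mult_inv_pos; [pose proof (Rabs_pos al); pose proof (Rabs_pos be); lra| lra]. lra. }
      pose proof (Rle_abs al) as Ha. pose proof (Rle_abs (-be)) as Hb. rewrite Rabs_Ropp in Hb.
      assert (-ga*s = Rabs al + 2*Rabs be + 1 - ga) by lra.
      assert (ga*s*s = - (s * (Rabs al + 2*Rabs be + 1 - ga))) by nra.
      assert (2*be*s <= 2*Rabs be*s) by (pose proof (Rle_abs be); nra).
      assert (Rabs al <= Rabs al * s) by (pose proof (Rabs_pos al); nra).
      assert (0 <= s * (-ga)) by nra.
      nra.
Qed.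

Definition dot n (u v : vec) := rsum n (fun k => u k * v k).
Definition n2 n (u : vec) := dot n u u.
Lemma n2_nonneg n u : 0 <= n2 n u.
Proof. apply rsum_nonneg; intros; nra. Qed.

Lemma CS n u v : dot n u v * dot n u v <= n2 n u * n2 n v.
Proof.
  apply discr. intros s. unfold n2, dot.
  replace (rsum n (fun k => u k * u k) + 2 * rsum n (fun k => u k * v k) * s + rsum n (fun k => v k * v k) * s * s)
   with (rsum n (fun k => (u k + s * v k) * (u k + s * v k))).
  apply rsum_nonneg; intros k _. apply Rle_0_sqr.
  transitivity (rsum n (fun k => u k*u k + (2*s)*(u k*v k) + (s*s)*(v k*v k))).
  apply rsum_ext; intros; ring. rewrite !rsum_plus, !rsum_scal. ring.
Qed.
Lemma rsum_lin3 n a b c c1 c2 :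
  rsum n (fun k => a k + c1 * b k + c2 * c k) = rsum n a + c1 * rsum n b + c2 * rsum n c.
Proof. rewrite !rsum_plus, !rsum_scal. auto. Qed.
Lemma rsum_scal_ext m K f g : (forall k, (k<m)%nat -> g k = K * f k) -> K * rsum m f = rsum m g.
Proof. intros H. rewrite <- rsum_scal. apply rsum_ext; intros; rewrite H; auto. Qed.
Definition bil n (v : vec) (M : Mat) (w : vec) := rsum n (fun i => rsum n (fun j => v i * M i j * w j)).
Lemma bil_expand n x y s M :
  bil n (fun k => x k + s * y k) M (fun k => x k + s * y k) =
  bil n x M x + s * (bil n x M y + bil n y M x) + (s*s) * bil n y M y.
Proof.
  unfold bil. rewrite <- (rsum_plus n (fun i => rsum n (fun j => x i * M i j * y j))).
  rewrite <- rsum_lin3. apply rsum_ext; intros. rewrite <- rsum_plus, <- rsum_lin3.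
  apply rsum_ext; intros; ring.
Qed.

Lemma sq_le a b : a*a <= b*b -> 0 <= b -> Rabs a <= b.
Proof. intros. destruct (Rcase_abs a); [rewrite Rabs_left|rewrite Rabs_right]; nra. Qed.

Definition fsq n (M : Mat) := rsum n (fun i => rsum n (fun j => (M i j)^2)).
Definition fip n (M N : Mat) := rsum n (fun i => rsum n (fun j => M i j * N i j)).

Lemma fsq_nonneg n M : 0 <= fsq n M.
Proof. apply rsum_nonneg; intros; apply rsum_nonneg; intros. apply pow2_ge_0. Qed.
Lemma frob_eq n M : frob n n M = sqrt (fsq n M).
Proof. reflexivity. Qed.
Lemma frob_nonneg n M : 0 <= frob n n M.
Proof. apply sqrt_pos. Qed.
Lemma frob_sq n M : frob n n M * frob n n M = fsq n M.
Proof. apply sqrt_sqrt, fsq_nonneg. Qed.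
Lemma fsq_fip n M : fsq n M = fip n M M.
Proof. apply rsum_ext; intros; apply rsum_ext; intros; ring. Qed.

Lemma fip_CS n M N : fip n M N * fip n M N <= fsq n M * fsq n N.
Proof.
  apply discr. intros s. rewrite !fsq_fip.
  replace (fip n M M + 2 * fip n M N * s + fip n N N * s * s)
   with (fsq n (fun i j => M i j + s * N i j)) by
  (unfold fsq, fip;
   transitivity (rsum n (fun i => rsum n (fun j => M i j * M i j) + (2*s) * rsum n (fun j => M i j * N i j) + (s*s) * rsum n (fun j => N i j * N i j)));
   [apply rsum_ext; intros; rewrite <- rsum_lin3; apply rsum_ext; intros; ring
   | rewrite rsum_lin3; ring]).
  apply fsq_nonneg.
Qed.

Lemma fip_abs n M N : Rabs (fip n M N) <= frob n n M * frob n n N.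
Proof.
  apply sq_le. replace (frob n n M * frob n n N * (frob n n M * frob n n N)) with
   ((frob n n M * frob n n M) * (frob n n N * frob n n N)) by ring.
  rewrite !frob_sq. apply fip_CS. apply Rmult_le_pos; apply frob_nonneg.
Qed.

Lemma fsq_trn n M : fsq n (trn M) = fsq n M.
Proof. unfold fsq, trn. apply rsum_swap. Qed.
Lemma frob_trn n M : frob n n (trn M) = frob n n M.
Proof. rewrite !frob_eq, fsq_trn; auto. Qed.

Lemma fsq_mmul n P Q : fsq n (mmul n P Q) <= fsq n P * fsq n Q.
Proof.
  unfold fsq, mmul.
  eapply Rle_trans with (rsum n (fun i => rsum n (fun j => n2 n (fun k => P i k) * n2 n (fun k => Q k j)))).
  - apply rsum_le; intros i Hi; apply rsum_le; intros j Hj.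
    pose proof (CS n (fun k => P i k) (fun k => Q k j)) as H1. unfold dot in H1. simpl in H1. simpl. nra.
  - rewrite rsum_prod. rewrite (rsum_swap n n (fun k j => Q k j ^2)).
    right. unfold n2, dot. f_equal; apply rsum_ext; intros; apply rsum_ext; intros; ring.
Qed.

Lemma frob_mmul n P Q : frob n n (mmul n P Q) <= frob n n P * frob n n Q.
Proof.
  rewrite !frob_eq, <- sqrt_mult by apply fsq_nonneg. apply sqrt_le_1.
  apply fsq_nonneg. apply Rmult_le_pos; apply fsq_nonneg. apply fsq_mmul.
Qed.

Lemma fip_mmul_bound n M P Q :
  Rabs (fip n M (mmul n P Q)) <= frob n n M * (frob n n P * frob n n Q).
Proof.
  eapply Rle_trans. apply fip_abs. apply Rmult_le_compat_l. apply frob_nonneg. apply frob_mmul.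
Qed.

Definition mv n (M : Mat) (x : vec) : vec := fun k => rsum n (fun j => M k j * x j).
Definition quad n (x : vec) (M : Mat) := rsum n (fun i => rsum n (fun j => x i * M i j * x j)).

Lemma n2_mv n M x : n2 n (mv n M x) <= fsq n M * n2 n x.
Proof.
  unfold n2 at 1, dot. unfold fsq. rewrite <- rsum_scal_r. apply rsum_le; intros.
  pose proof (CS n (fun j => M k j) x). unfold dot, n2, dot in H0. unfold mv.
  eapply Rle_trans. apply H0. right. f_equal. apply rsum_ext; intros; ring.
Qed.

Lemma quad_dot n x M : quad n x M = dot n x (mv n M x).
Proof. unfold quad, dot, mv. apply rsum_ext; intros. rewrite <- rsum_scal. apply rsum_ext; intros; ring. Qed.

Lemma dot_abs n u v : Rabs (dot n u v) <= sqrt (n2 n u) * sqrt (n2 n v).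
Proof.
  apply sq_le. replace (sqrt (n2 n u) * sqrt (n2 n v) * (sqrt (n2 n u) * sqrt (n2 n v))) with
   ((sqrt (n2 n u) * sqrt (n2 n u)) * (sqrt (n2 n v) * sqrt (n2 n v))) by ring.
  rewrite !sqrt_sqrt by apply n2_nonneg. apply CS.
  apply Rmult_le_pos; apply sqrt_pos.
Qed.

Lemma quad_abs n x M : Rabs (quad n x M) <= frob n n M * n2 n x.
Proof.
  rewrite quad_dot. apply sq_le.
  - eapply Rle_trans. apply CS. pose proof (n2_mv n M x). pose proof (n2_nonneg n x).
    rewrite <- (frob_sq n M) in H. nra.
  - apply Rmult_le_pos. apply frob_nonneg. apply n2_nonneg.
Qed.

Definition clamp a b s := Rmax a (Rmin b s).
Lemma clamp_in a b s : a <= b -> a <= clamp a b s <= b.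
Proof. unfold clamp, Rmax, Rmin; intros; repeat destruct Rle_dec; lra. Qed.
Lemma clamp_id a b s : a <= s <= b -> clamp a b s = s.
Proof. unfold clamp, Rmax, Rmin; intros; repeat destruct Rle_dec; lra. Qed.
Lemma clamp_lip a b s t : a <= b -> Rabs (clamp a b s - clamp a b t) <= Rabs (s - t).
Proof. unfold clamp, Rmax, Rmin; intros; repeat destruct Rle_dec;
  unfold Rabs; repeat destruct Rcase_abs; lra. Qed.

Definition wcont a b (f : R -> R) := forall t, a <= t <= b -> forall eps, 0 < eps ->
  exists delta, 0 < delta /\ forall s, a <= s <= b -> Rabs (s - t) < delta -> Rabs (f s - f t) < eps.

Lemma wcont_cpt a b f : a <= b -> wcont a b f -> forall c, continuity_pt (fun s => f (clamp a b s)) c.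
Proof.
  intros Hab H c eps Heps.
  destruct (H (clamp a b c) (clamp_in a b c Hab) eps Heps) as [d [Hd Hs]].
  exists d; split; auto. intros x [_ Hx]. simpl in *. unfold Rdist in *.
  apply Hs. apply clamp_in; auto. eapply Rle_lt_trans. apply clamp_lip; auto. auto.
Qed.

Lemma rsum_cont n (f : nat -> R -> R) c :
  (forall k, (k < n)%nat -> continuity_pt (f k) c) -> continuity_pt (fun s => rsum n (fun k => f k s)) c.
Proof.
  induction n; simpl; intros H. apply continuity_pt_const; intros ? ?; auto.
  apply (continuity_pt_plus (fun s => rsum n (fun k => f k s)) (f n)). apply IHn; intros; apply H; lia. apply H; lia.
Qed.

Lemma rsum_deriv n (f : nat -> R -> R) l c :
  (forall k, (k < n)%nat -> derivable_pt_lim (f k) c (l k)) ->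
  derivable_pt_lim (fun s => rsum n (fun k => f k s)) c (rsum n l).
Proof.
  induction n; simpl; intros H. apply derivable_pt_lim_const.
  apply (derivable_pt_lim_plus (fun s => rsum n (fun k => f k s)) (f n)). apply IHn; intros; apply H; lia. apply H; lia.
Qed.

Lemma sq_deriv f c l : derivable_pt_lim f c l -> derivable_pt_lim (fun s => (f s)^2) c (2 * f c * l).
Proof.
  intros H. apply derivable_pt_lim_ext with (f := fun s => f s * f s). intros; ring.
  replace (2 * f c * l) with (l * f c + f c * l) by ring. apply derivable_pt_lim_mult; auto.
Qed.

Lemma mono (G l : R -> R) al be : al <= be ->
  (forall c, al <= c <= be -> continuity_pt G c) ->
  (forall c, al < c < be -> derivable_pt_lim G c (l c)) ->
  (forall c, al < c < be -> l c <= 0) -> G be <= G al.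
Proof.
  intros Hab Hc Hd Hl. destruct (Req_dec al be). subst; lra.
  assert (pr : forall c, al < c < be -> derivable_pt G c).
  { intros c Hc'. exists (l c). apply Hd; auto. }
  assert (pr2 : forall c, al < c < be -> derivable_pt id c).
  { intros. apply derivable_pt_id. }
  destruct (MVT G id al be pr pr2 ltac:(lra) Hc) as [c [P Heq]].
  { intros; apply derivable_continuous, derivable_id. }
  rewrite (derive_pt_eq_0 G c (l c) (pr c P) (Hd c P)) in Heq.
  rewrite (derive_pt_eq_0 id c 1 (pr2 c P) (derivable_pt_lim_id c)) in Heq.
  unfold id in Heq. pose proof (Hl c P). nra.
Qed.
Lemma exp_le x y : x <= y -> exp x <= exp y.
Proof. intros [H|H]. left; apply exp_increasing; auto. subst; lra. Qed.

Lemma abs_le_b x y : Rabs x <= y -> -y <= x <= y.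
Proof. unfold Rabs; destruct Rcase_abs; lra. Qed.

Lemma fip_ext n M N N' : (forall i j, (i<n)%nat -> (j<n)%nat -> N i j = N' i j) -> fip n M N = fip n M N'.
Proof. intros H; unfold fip; apply rsum_ext; intros; apply rsum_ext; intros; rewrite H; auto. Qed.
Lemma fip_plus n M N1 N2 : fip n M (fun i j => N1 i j + N2 i j) = fip n M N1 + fip n M N2.
Proof. unfold fip. rewrite <- rsum_plus. apply rsum_ext; intros. rewrite <- rsum_plus. apply rsum_ext; intros; ring. Qed.
Lemma fip_minus n M N1 N2 : fip n M (fun i j => N1 i j - N2 i j) = fip n M N1 - fip n M N2.
Proof. unfold fip. rewrite <- rsum_minus. apply rsum_ext; intros. rewrite <- rsum_minus. apply rsum_ext; intros; ring. Qed.
Lemma fip_scal n M c N : fip n M (fun i j => c * N i j) = c * fip n M N.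
Proof. unfold fip. rewrite <- rsum_scal. apply rsum_ext; intros. rewrite <- rsum_scal. apply rsum_ext; intros; ring. Qed.

Lemma mmul_diff n P Q P' Q' i j :
  mmul n P Q i j - mmul n P' Q' i j = mmul n P (msub Q Q') i j + mmul n (msub P P') Q' i j.
Proof. unfold mmul, msub. rewrite <- rsum_minus, <- rsum_plus. apply rsum_ext; intros; ring. Qed.

Lemma rhs_diff d d' lam C A1 E1 A2 E2 i j :
  riccati_rhs d d' lam C A1 E1 i j - riccati_rhs d d' lam C A2 E2 i j =
  (- (mmul d (trn A1) (msub E1 E2) i j + mmul d (trn (msub A1 A2)) E2 i j)
   - (mmul d E1 (msub A1 A2) i j + mmul d (msub E1 E2) A2 i j))
   - (1/lam) * (mmul d E1 (msub E1 E2) i j + mmul d (msub E1 E2) E2 i j).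
Proof.
  rewrite <- !mmul_diff.
  replace (mmul d (trn A1) (msub E1 E2) i j + mmul d (trn (msub A1 A2)) E2 i j) with
    (mmul d (trn A1) E1 i j - mmul d (trn A2) E2 i j).
  2:{ rewrite mmul_diff. reflexivity. }
  unfold riccati_rhs, msub, mscal. ring.
Qed.

Lemma fip_rhs_bound d d' lam C A1 E1 A2 E2 a B :
  0 < lam -> 0 <= B -> frob d d A1 <= a -> frob d d A2 <= a -> frob d d E1 <= B -> frob d d E2 <= B ->
  2 * fip d (msub E1 E2) (msub (riccati_rhs d d' lam C A1 E1) (riccati_rhs d d' lam C A2 E2))
  <= (4*a + 1 + 4*B/lam) * fsq d (msub E1 E2) + 4*B*B*(frob d d (msub A1 A2))^2.
Proof.
  intros Hl HB Ha1 Ha2 Hb1 Hb2.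
  set (D := msub E1 E2).
  rewrite (fip_ext d D _ (fun i j => (- (mmul d (trn A1) D i j + mmul d (trn (msub A1 A2)) E2 i j)
   - (mmul d E1 (msub A1 A2) i j + mmul d D A2 i j))
   - (1/lam) * (mmul d E1 D i j + mmul d D E2 i j))).
  2:{ intros. unfold msub at 1. apply rhs_diff. }
  rewrite fip_minus, fip_scal, fip_minus.
  rewrite (fip_ext d D (fun i j => - (mmul d (trn A1) D i j + mmul d (trn (msub A1 A2)) E2 i j))
    (fun i j => (-1) * (mmul d (trn A1) D i j + mmul d (trn (msub A1 A2)) E2 i j))) by (intros; ring).
  rewrite fip_scal, !fip_plus.
  pose proof (fip_mmul_bound d D (trn A1) D) as X1.
  pose proof (fip_mmul_bound d D (trn (msub A1 A2)) E2) as X2.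
  pose proof (fip_mmul_bound d D E1 (msub A1 A2)) as X3.
  pose proof (fip_mmul_bound d D D A2) as X4.
  pose proof (fip_mmul_bound d D E1 D) as X5.
  pose proof (fip_mmul_bound d D D E2) as X6.
  rewrite !frob_trn in *.
  rewrite <- (frob_sq d D).
  set (fd := frob d d D) in *. set (ga := frob d d (msub A1 A2)) in *.
  assert (0 <= fd) by apply frob_nonneg. assert (0 <= ga) by apply frob_nonneg.
  assert (0 <= frob d d A1) by apply frob_nonneg.
  assert (0 <= frob d d A2) by apply frob_nonneg.
  assert (0 <= frob d d E1) by apply frob_nonneg.
  assert (0 <= frob d d E2) by apply frob_nonneg.
  assert (0 <= fd*ga) by (apply Rmult_le_pos; auto).
  assert (0 <= fd*fd) by (apply Rmult_le_pos; auto).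
  set (Y5 := fip d D (mmul d E1 D)) in *. set (Y6 := fip d D (mmul d D E2)) in *.
  assert (Habs : Rabs (Y5 + Y6) <= 2*B*(fd*fd)).
  { eapply Rle_trans. apply Rabs_triang. 
    assert (fd*(frob d d E1*fd) <= B*(fd*fd)) by nra.
    assert (fd*(fd*frob d d E2) <= B*(fd*fd)) by nra. lra. }
  apply abs_le_b in X1. apply abs_le_b in X2. apply abs_le_b in X3.
  apply abs_le_b in X4.
  assert (fd*(frob d d A1*fd) <= a*(fd*fd)) by nra.
  assert (fd*(fd*frob d d A2) <= a*(fd*fd)) by nra.
  assert (fd*(ga*frob d d E2) <= B*fd*ga) by nra.
  assert (fd*(frob d d E1*ga) <= B*fd*ga) by nra.
  assert (4*B*fd*ga <= fd*fd + 4*B*B*ga^2) by (pose proof (pow2_ge_0 (fd - 2*B*ga)); nra).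
  assert (- (1/lam) * (Y5+Y6) <= (2*B/lam)*(fd*fd)).
  { assert (-(Y5+Y6) <= 2*B*(fd*fd)) by (pose proof (Rle_abs (-(Y5+Y6))); rewrite Rabs_Ropp in *; lra).
    assert (0 < 1/lam) by (apply Rdiv_lt_0_compat; lra).
    replace (2*B/lam*(fd*fd)) with ((1/lam)*(2*B*(fd*fd))) by (field; lra). nra. }
  lra.
Qed.
From Coquelicot Require Import Coquelicot.
Open Scope R_scope.

Lemma prim_deriv f : (forall c, continuity_pt f c) -> forall x, derivable_pt_lim (fun s => RInt f 0 s) x (f x).
Proof.
  intros H x. apply is_derive_Reals. apply (is_derive_RInt f (fun s => RInt f 0 s) 0).
  apply filter_forall; intros. apply (@RInt_correct R_CompleteNormedModule). apply (@ex_RInt_continuous R_CompleteNormedModule); intros; apply continuity_pt_filterlim; auto.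
  apply continuity_pt_filterlim; auto.
Qed.

Lemma sol_cont d d' T lam C Q A E : 0 < T -> riccati_sol d d' T lam C Q A E ->
  forall i j, (i<d)%nat -> (j<d)%nat -> forall c, continuity_pt (fun s => E (clamp 0 T s) i j) c.
Proof.
  intros HT [_ [H _]] i j Hi Hj. apply (wcont_cpt 0 T (fun s => E s i j)). lra. intros t Ht. apply H; auto.
Qed.

Lemma exp_deriv k c : derivable_pt_lim (fun s => exp (-(k*s))) c (exp (-(k*c)) * (-k)).
Proof.
  apply (derivable_pt_lim_comp (fun s => -(k*s)) exp c (-k) (exp (-(k*c)))).
  replace (-k) with (-(k*1)) by ring. apply derivable_pt_lim_opp, derivable_pt_lim_scal, derivable_pt_lim_id.
  apply derivable_pt_lim_exp.
Qed.

Lemma fsq_diff_deriv d d' T lam C Q A1 A2 E1 E2 c :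
  riccati_sol d d' T lam C Q A1 E1 -> riccati_sol d d' T lam C Q A2 E2 -> 0 < c < T ->
  derivable_pt_lim (fun s => fsq d (msub (E1 s) (E2 s))) c
    (2 * fip d (msub (E1 c) (E2 c)) (msub (riccati_rhs d d' lam C (A1 c) (E1 c)) (riccati_rhs d d' lam C (A2 c) (E2 c)))).
Proof.
  intros [_ [_ H1]] [_ [_ H2]] Hc.
  unfold fip. rewrite <- rsum_scal.
  replace (rsum d (fun k => 2 * rsum d (fun j => msub (E1 c) (E2 c) k j *
     msub (riccati_rhs d d' lam C (A1 c) (E1 c)) (riccati_rhs d d' lam C (A2 c) (E2 c)) k j)))
  with (rsum d (fun i => rsum d (fun j => 2 * (E1 c i j - E2 c i j) *
     (riccati_rhs d d' lam C (A1 c) (E1 c) i j - riccati_rhs d d' lam C (A2 c) (E2 c) i j)))).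
  2:{ apply rsum_ext; intros. rewrite <- rsum_scal. apply rsum_ext; intros. unfold msub; ring. }
  unfold fsq. apply (rsum_deriv d (fun i s => rsum d (fun j => msub (E1 s) (E2 s) i j ^ 2))).
  intros i Hi. apply (rsum_deriv d (fun j s => msub (E1 s) (E2 s) i j ^ 2)).
  intros j Hj. unfold msub. apply (sq_deriv (fun s => E1 s i j - E2 s i j)).
  apply derivable_pt_lim_minus; auto.
Qed.

Lemma fsq_cont_clamp d d' T lam C Q A1 A2 E1 E2 : 0 < T ->
  riccati_sol d d' T lam C Q A1 E1 -> riccati_sol d d' T lam C Q A2 E2 ->
  forall c, continuity_pt (fun s => fsq d (msub (E1 (clamp 0 T s)) (E2 (clamp 0 T s)))) c.
Proof.
  intros HT S1 S2 c. unfold fsq.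
  apply (rsum_cont d (fun i s => rsum d (fun j => msub (E1 (clamp 0 T s)) (E2 (clamp 0 T s)) i j ^ 2))).
  intros i Hi. apply (rsum_cont d (fun j s => msub (E1 (clamp 0 T s)) (E2 (clamp 0 T s)) i j ^ 2)).
  intros j Hj. unfold msub.
  apply (continuity_pt_ext (fun s => (E1 (clamp 0 T s) i j - E2 (clamp 0 T s) i j) * (E1 (clamp 0 T s) i j - E2 (clamp 0 T s) i j))).
  intros; ring.
  apply continuity_pt_mult; apply continuity_pt_minus; eapply sol_cont; eauto.
Qed.

Lemma diff_est d d' T lam C Q A1 A2 E1 E2 a B :
  0 < T -> 0 < lam -> 0 <= B ->
  riccati_sol d d' T lam C Q A1 E1 -> riccati_sol d d' T lam C Q A2 E2 ->
  (forall t, 0 <= t <= T -> frob d d (A1 t) <= a /\ frob d d (A2 t) <= a /\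
      frob d d (E1 t) <= B /\ frob d d (E2 t) <= B) ->
  wcont 0 T (fun s => (frob d d (msub (A1 s) (A2 s)))^2) ->
  forall t, 0 <= t <= T ->
  fsq d (msub (E1 t) (E2 t)) <= 4*B*B * exp ((4*a + 1 + 4*B/lam) * T) *
      RInt (fun s => (frob d d (msub (A1 s) (A2 s)))^2) 0 T.
Proof.
  intros HT Hl HB S1 S2 Hbd Hg t Ht.
  assert (Ha : 0 <= a). { destruct (Hbd 0 ltac:(lra)) as [H _]. pose proof (frob_nonneg d (A1 0)). lra. }
  set (ka := 4*a + 1 + 4*B/lam).
  assert (Hka : 0 <= ka). { unfold ka. assert (0 <= B/lam) by (apply Rdiv_le_0_compat; lra). lra. }
  set (g := fun s => (frob d d (msub (A1 s) (A2 s)))^2).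
  set (gc := fun s => g (clamp 0 T s)).
  assert (Hgc : forall c, continuity_pt gc c) by (apply wcont_cpt; [lra|exact Hg]).
  set (u := fun s => fsq d (msub (E1 s) (E2 s))).
  set (W := fun s => u (clamp 0 T s) * exp (-(ka*s)) - 4*B*B * RInt gc 0 s).
  assert (HW : W t <= W 0).
  { apply (mono W (fun c => (2 * fip d (msub (E1 c) (E2 c)) (msub (riccati_rhs d d' lam C (A1 c) (E1 c)) (riccati_rhs d d' lam C (A2 c) (E2 c))))
        * exp (-(ka*c)) + u c * (exp (-(ka*c)) * (-ka)) - 4*B*B * gc c)); try lra.
    - intros c _. unfold W. apply continuity_pt_minus. apply continuity_pt_mult.
      apply (fsq_cont_clamp d d' T lam C Q A1 A2 E1 E2); auto.
      apply derivable_continuous_pt. exists (exp (-(ka*c)) * (-ka)). apply exp_deriv.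
      apply continuity_pt_scal. apply derivable_continuous_pt. exists (gc c). apply prim_deriv; auto.
    - intros c Hc. unfold W. apply derivable_pt_lim_minus.
      + replace (u c) with (u (clamp 0 T c)) by (rewrite clamp_id; auto; lra).
        apply (derivable_pt_lim_mult (fun s => u (clamp 0 T s)) (fun s => exp (-(ka*s)))).
        2: apply exp_deriv.
        apply (derivable_pt_lim_locally_ext u _ c 0 T). lra.
        intros z Hz. rewrite clamp_id; auto; lra.
        apply (fsq_diff_deriv d d' T lam C Q); auto; lra.
      + apply derivable_pt_lim_scal. apply prim_deriv; auto.
    - intros c Hc. fold (u c).
      destruct (Hbd c ltac:(lra)) as [B1 [B2 [B3 B4]]].
      pose proof (fip_rhs_bound d d' lam C (A1 c) (E1 c) (A2 c) (E2 c) a B Hl HB B1 B2 B3 B4) as Hr.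
      fold (u c) in Hr. unfold gc. rewrite clamp_id by lra. fold (g c) in Hr.
      assert (0 <= g c) by (unfold g; apply pow2_ge_0).
      assert (0 < exp (-(ka*c))) by apply exp_pos.
      assert (exp (-(ka*c)) <= 1). { rewrite <- exp_0. apply exp_le. assert (0 <= ka*c) by (apply Rmult_le_pos; lra); lra. }
      fold ka in Hr.
      set (F := 2 * fip d (msub (E1 c) (E2 c)) (msub (riccati_rhs d d' lam C (A1 c) (E1 c)) (riccati_rhs d d' lam C (A2 c) (E2 c)))) in *.
      set (e := exp (-(ka*c))) in *.
      assert ((F - ka * u c - 4*B*B*g c) * e <= 0) by (apply Rmult_le_0_r; lra).
      assert (4*B*B*g c * (e - 1) <= 0).
      { rewrite Rmult_comm; apply Rmult_le_0_r. lra. assert (0 <= B*B) by nra. assert (0 <= B*B*g c) by nra. lra. }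
      nra. }
  unfold W in HW. rewrite RInt_point in HW. rewrite (clamp_id 0 T 0) in HW by lra.
  rewrite (clamp_id 0 T t) in HW by lra.
  assert (Hu0 : u 0 = 0).
  { unfold u, fsq. apply rsum_zero; intros; apply rsum_zero; intros. destruct S1 as [Q1 _]. destruct S2 as [Q2 _].
    unfold msub. rewrite Q1, Q2; auto. ring. }
  rewrite Hu0 in HW. replace (-(ka*0)) with 0 in HW by ring. rewrite exp_0 in HW.
  change zero with 0 in HW.
  assert (Hex : ex_RInt gc 0 T).
  { apply (@ex_RInt_continuous R_CompleteNormedModule); intros; apply continuity_pt_filterlim; auto. }
  assert (Hext : forall x y, ex_RInt gc x y).
  { intros. apply (@ex_RInt_continuous R_CompleteNormedModule); intros; apply continuity_pt_filterlim; auto. }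
  assert (HI : RInt gc 0 t <= RInt gc 0 T).
  { rewrite <- (RInt_Chasles gc 0 t T) by auto. change plus with Rplus.
    assert (0 <= RInt gc t T). apply RInt_ge_0; try lra; auto. intros; unfold gc, g; apply pow2_ge_0. lra. }
  assert (HIe : RInt gc 0 T = RInt g 0 T).
  { apply RInt_ext. intros x Hx. unfold gc. rewrite clamp_id; auto. rewrite Rmin_left, Rmax_right in Hx; lra. }
  rewrite HIe in HI.
  assert (0 <= RInt g 0 T). { rewrite <- HIe. apply RInt_ge_0; try lra; auto. intros; unfold gc, g; apply pow2_ge_0. }
  assert (0 < exp (-(ka*t))) by apply exp_pos.
  assert (Hk : exp (ka*t) <= exp (ka*T)) by (apply exp_le; nra).
  assert (Hee : exp (-(ka*t)) * exp (ka*t) = 1) by (rewrite <- exp_plus; replace (-(ka*t) + ka*t) with 0 by ring; apply exp_0).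
  fold (u t). fold g.
  assert (u t * exp (-(ka*t)) <= 4*B*B * RInt g 0 T) by nra.
  assert (u t <= 4*B*B * RInt g 0 T * exp (ka*t)).
  { replace (u t) with (u t * exp (-(ka*t)) * exp (ka*t)) by (rewrite Rmult_assoc, Hee; ring).
    apply Rmult_le_compat_r; [left; apply exp_pos|auto]. }
  assert (0 <= 4*B*B * RInt g 0 T) by (assert (0 <= B*B) by nra; nra).
  nra.
Qed.

Lemma dot_sym n u v : dot n u v = dot n v u.
Proof. unfold dot; apply rsum_ext; intros; ring. Qed.

Lemma quad_mmul m n x P R : quad n x (mmul m (trn P) R) = rsum m (fun k => mv n P x k * mv n R x k).
Proof.
  unfold quad, mmul, mv, trn.
  transitivity (rsum n (fun i => rsum n (fun j => rsum m (fun k => P k i * x i * (R k j * x j))))).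
  { apply rsum_ext; intros i Hi; apply rsum_ext; intros j Hj.
    transitivity (x i * x j * rsum m (fun k => P k i * R k j)). ring.
    apply rsum_scal_ext; intros; ring. }
  transitivity (rsum n (fun i => rsum m (fun k => rsum n (fun j => P k i * x i * (R k j * x j))))).
  { apply rsum_ext; intros. apply rsum_swap. }
  rewrite rsum_swap. apply rsum_ext; intros. 
  exact (rsum_prod n n (fun i => P k i * x i) (fun j => R k j * x j)).
Qed.

Lemma quad_minus n x P R : quad n x (fun i j => P i j - R i j) = quad n x P - quad n x R.
Proof. unfold quad. rewrite <- rsum_minus. apply rsum_ext; intros. rewrite <- rsum_minus. apply rsum_ext; intros; ring. Qed.
Lemma quad_scal n x c P : quad n x (fun i j => c * P i j) = c * quad n x P.
Proof. unfold quad. rewrite <- rsum_scal. apply rsum_ext; intros. rewrite <- rsum_scal. apply rsum_ext; intros; ring. Qed.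

Lemma quad_rhs d d' lam C A E x :
  quad d x (riccati_rhs d d' lam C A E) =
  rsum d' (fun k => mv d C x k * mv d C x k) - dot d (mv d A x) (mv d E x)
  - dot d (mv d (trn E) x) (mv d A x) - (1/lam) * dot d (mv d (trn E) x) (mv d E x).
Proof.
  unfold riccati_rhs, msub at 1, mscal.
  rewrite quad_minus, quad_scal. unfold msub at 1. rewrite quad_minus. unfold msub. rewrite quad_minus.
  change (mmul d E A) with (mmul d (trn (trn E)) A).
  change (mmul d E E) with (mmul d (trn (trn E)) E).
  rewrite !quad_mmul. unfold dot. reflexivity.
Qed.

Lemma mv_sym d E x : (forall i j, (i<d)%nat -> (j<d)%nat -> E i j = E j i) ->
  forall k, (k<d)%nat -> mv d (trn E) x k = mv d E x k.
Proof. intros H k Hk. unfold mv, trn. apply rsum_ext; intros. rewrite H; auto. Qed.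

Lemma dot_mv_sym d E v w : (forall i j, (i<d)%nat -> (j<d)%nat -> E i j = E j i) ->
  dot d v (mv d E w) = dot d (mv d E v) w.
Proof.
  intros H. unfold dot, mv.
  transitivity (rsum d (fun k => rsum d (fun j => v k * E k j * w j))).
  { apply rsum_ext; intros. rewrite <- rsum_scal. apply rsum_ext; intros; ring. }
  rewrite rsum_swap. apply rsum_ext; intros. rewrite <- rsum_scal_r. apply rsum_ext; intros.
  rewrite (H k0 k) by auto. ring.
Qed.

Lemma n2_expand n x y s : n2 n (fun k => x k + s * y k) = n2 n x + s * (2 * dot n x y) + (s*s) * n2 n y.
Proof. unfold n2, dot. rewrite <- rsum_scal, <- rsum_lin3. apply rsum_ext; intros; ring. Qed.

Lemma bil_sym d E x y : (forall i j, (i<d)%nat -> (j<d)%nat -> E i j = E j i) -> bil d y E x = bil d x E y.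
Proof. intros H. unfold bil. rewrite rsum_swap. apply rsum_ext; intros; apply rsum_ext; intros.
  rewrite H by auto. ring. Qed.

Lemma bil_mv d E x y : (forall i j, (i<d)%nat -> (j<d)%nat -> E i j = E j i) -> bil d x E y = dot d (mv d E x) y.
Proof. intros H. unfold bil, dot, mv. rewrite rsum_swap. apply rsum_ext; intros.
  rewrite <- rsum_scal_r. apply rsum_ext; intros. rewrite (H k0 k) by auto. ring. Qed.

Lemma psd_cs d E c x M :
  (forall i j, (i<d)%nat -> (j<d)%nat -> E i j = E j i) ->
  (forall v, 0 <= quad d v E + c * n2 d v) ->
  (forall v, quad d v E + c * n2 d v <= M * n2 d v) -> 0 <= M ->
  n2 d (fun k => mv d E x k + c * x k) <= M * (quad d x E + c * n2 d x).
Proof.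
  intros Hs Hpsd HM HM0.
  set (y := fun k => mv d E x k + c * x k).
  set (q := fun v => quad d v E + c * n2 d v).
  set (b := bil d x E y + c * dot d x y).
  assert (Hb : b = n2 d y).
  { unfold b. rewrite bil_mv by auto. unfold n2, dot, y.
    rewrite <- rsum_scal, <- rsum_plus. apply rsum_ext; intros. ring. }
  assert (Hd : b * b <= q x * q y).
  { apply discr. intros s.
    replace (q x + 2 * b * s + q y * s * s) with (q (fun k => x k + s * y k)). apply Hpsd.
    unfold q, b. unfold quad. fold (bil d (fun k => x k + s * y k) E (fun k => x k + s * y k)).
    rewrite bil_expand, n2_expand. rewrite (bil_sym d E x y) by auto.
    unfold bil. ring. }
  rewrite Hb in Hd. fold (q x).
  assert (0 <= n2 d y) by apply n2_nonneg.
  pose proof (HM y). fold (q y) in H0. pose proof (Hpsd x). fold (q x) in H1.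
  destruct (Req_dec (n2 d y) 0) as [Hz|Hz].
  - rewrite Hz. apply Rmult_le_pos; auto.
  - assert (n2 d y * n2 d y <= q x * (M * n2 d y)).
    { eapply Rle_trans. apply Hd. apply Rmult_le_compat_l; auto. }
    assert (n2 d y * n2 d y <= (M * q x) * n2 d y) by lra.
    apply Rmult_le_reg_r with (n2 d y). lra. lra.
Qed.

Lemma rsum_ge_term n f k : (forall k, (k<n)%nat -> 0 <= f k) -> (k < n)%nat -> f k <= rsum n f.
Proof.
  induction n; intros H Hk. lia. simpl. destruct (Nat.eq_dec k n).
  - subst. assert (0 <= rsum n f) by (apply rsum_nonneg; intros; apply H; lia). lra.
  - pose proof (IHn ltac:(intros; apply H; lia) ltac:(lia)). pose proof (H n ltac:(lia)). lra.
Qed.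

Lemma fsq_entry n M i j : (i<n)%nat -> (j<n)%nat -> (M i j)^2 <= fsq n M.
Proof.
  intros Hi Hj. unfold fsq. eapply Rle_trans. 2: apply (rsum_ge_term n (fun i => rsum n (fun j => M i j ^2)) i); auto.
  apply (rsum_ge_term n (fun j => M i j ^2) j); auto. intros; apply pow2_ge_0.
  intros; apply rsum_nonneg; intros; apply pow2_ge_0.
Qed.

Lemma frob_msub_self n X : frob n n (msub X X) = 0.
Proof. rewrite frob_eq. rewrite <- sqrt_0. f_equal. unfold fsq, msub. apply rsum_zero; intros; apply rsum_zero; intros. ring. Qed.

Lemma sol_trn d d' T lam C Q A E : sym_psd d Q -> riccati_sol d d' T lam C Q A E ->
  riccati_sol d d' T lam C Q A (fun s => trn (E s)).
Proof.
  intros [HQ _] [H0 [H1 H2]]. split; [|split].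
  - intros i j Hi Hj. unfold trn. rewrite H0 by auto. apply HQ; auto.
  - intros i j Hi Hj. unfold trn. apply H1; auto.
  - intros i j Hi Hj t Ht. unfold trn at 1.
    replace (riccati_rhs d d' lam C (A t) (trn (E t)) i j) with (riccati_rhs d d' lam C (A t) (E t) j i).
    apply H2; auto.
    unfold riccati_rhs, msub, mscal, mmul, trn.
    replace (rsum d' (fun k => C k j * C k i)) with (rsum d' (fun k => C k i * C k j)) by (apply rsum_ext; intros; ring).
    replace (rsum d (fun k => E t j k * A t k i)) with (rsum d (fun k => A t k i * E t j k)) by (apply rsum_ext; intros; ring).
    replace (rsum d (fun k => E t j k * E t k i)) with (rsum d (fun k => E t k i * E t j k)) by (apply rsum_ext; intros; ring).
    replace (rsum d (fun k => A t k j * E t k i)) with (rsum d (fun k => E t k i * A t k j)) by (apply rsum_ext; intros; ring).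
    ring.
Qed.

Lemma sol_sym d d' T lam C Q A E a B : 0 < T -> 0 < lam -> 0 <= B -> sym_psd d Q ->
  riccati_sol d d' T lam C Q A E ->
  (forall t, 0 <= t <= T -> frob d d (A t) <= a /\ frob d d (E t) <= B) ->
  forall t, 0 <= t <= T -> forall i j, (i<d)%nat -> (j<d)%nat -> E t i j = E t j i.
Proof.
  intros HT Hl HB HQ S Hbd t Ht i j Hi Hj.
  pose proof (diff_est d d' T lam C Q A A E (fun s => trn (E s)) a B HT Hl HB S (sol_trn d d' T lam C Q A E HQ S)) as H.
  assert (Hg : forall s, (frob d d (msub (A s) (A s)))^2 = 0) by (intros; rewrite frob_msub_self; ring).
  assert (HR : RInt (fun s => (frob d d (msub (A s) (A s)))^2) 0 T = 0).
  { rewrite (RInt_ext _ (fun _ => 0)). rewrite RInt_const. exact (Rmult_0_r (T-0)). intros; apply Hg. }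
  rewrite HR in H. 
  assert (fsq d (msub (E t) (trn (E t))) <= 0).
  { replace 0 with (4 * B * B * exp ((4 * a + 1 + 4 * B / lam) * T) * 0) by ring. apply H; auto.
    - intros s Hs. destruct (Hbd s Hs). rewrite frob_trn. auto.
    - intros s _ eps Heps. exists 1. split. lra. intros. rewrite !Hg. rewrite Rminus_0_r, Rabs_R0; auto. }
  pose proof (fsq_entry d (msub (E t) (trn (E t))) i j Hi Hj).
  change (msub (E t) (trn (E t)) i j) with (E t i j - E t j i) in H1.
  assert ((E t i j - E t j i)^2 = 0) by (pose proof (pow2_ge_0 (E t i j - E t j i)); lra).
  simpl in H2. rewrite Rmult_1_r in H2. apply Rmult_integral in H2. lra.
Qed.

Lemma n2_lin n al be u v : n2 n (fun k => al * u k + be * v k) = al*al*n2 n u + 2*al*be*dot n u v + be*be*n2 n v.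
Proof. unfold n2, dot. rewrite <- (rsum_scal n (al*al)), <- (rsum_scal n (2*al*be)), <- (rsum_scal n (be*be)), <- !rsum_plus.
  apply rsum_ext; intros; ring. Qed.

Lemma young n u v eta : 0 < eta -> 2 * dot n u v <= eta * n2 n u + n2 n v / eta.
Proof.
  intros He. pose proof (n2_nonneg n (fun k => eta * u k + (-1) * v k)). rewrite n2_lin in H.
  assert (0 <= eta * eta * n2 n u - 2 * eta * dot n u v + n2 n v) by lra.
  assert (2 * dot n u v * eta <= (eta * n2 n u + n2 n v / eta) * eta).
  { replace ((eta * n2 n u + n2 n v / eta) * eta) with (eta*eta*n2 n u + n2 n v) by (field; lra). lra. }
  apply Rmult_le_reg_r with eta; auto.
Qed.

Lemma deriv_bound d d' lam C A E x a M eps c :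
  0 < lam -> 0 < eps -> eps <= c -> c <= lam/4 -> 0 < M -> 0 <= a ->
  (forall i j, (i<d)%nat -> (j<d)%nat -> E i j = E j i) ->
  frob d d A <= a ->
  (forall v, 0 <= quad d v E + c * n2 d v) ->
  (forall v, quad d v E + c * n2 d v <= M * n2 d v) ->
  quad d x E + c * n2 d x <=
    eps / (8 * (1 / (eps / (8 * (a*a+1))) + 2/lam) * M) * n2 d x ->
  eps * n2 d x / 4 <= quad d x (riccati_rhs d d' lam C A E) + c * (a*a+2) * n2 d x.
Proof.
  intros Hl He Hc1 Hc2 HM Ha Hs HA Hpsd HMb Hh.
  set (eta := eps / (8 * (a*a+1))).
  set (K := 1/eta + 2/lam).
  assert (Heta : 0 < eta) by (unfold eta; apply Rdiv_lt_0_compat; nra).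
  assert (HK : 0 < K) by (unfold K; assert (0 < 1/eta) by (apply Rdiv_lt_0_compat; lra);
                          assert (0 < 2/lam) by (apply Rdiv_lt_0_compat; lra); lra).
  fold eta K in Hh.
  set (n := n2 d x) in *.
  rewrite quad_rhs.
  rewrite (dot_sym d (mv d (trn E) x) (mv d A x)).
  assert (Ht : forall z, dot d z (mv d (trn E) x) = dot d z (mv d E x)).
  { intros. unfold dot. apply rsum_ext; intros. rewrite mv_sym; auto. }
  assert (Ht2 : dot d (mv d (trn E) x) (mv d E x) = n2 d (mv d E x)).
  { unfold n2. rewrite dot_sym. apply Ht. }
  rewrite Ht, Ht2.
  set (u := mv d A x). set (w := mv d E x). set (y := fun k => w k + c * x k).
  assert (HSC : 0 <= rsum d' (fun k => mv d C x k * mv d C x k)) by (apply rsum_nonneg; intros; nra).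
  assert (Hn : 0 <= n) by apply n2_nonneg.
  assert (Huy : dot d u y = dot d u w + c * dot d u x).
  { unfold dot, y. rewrite <- rsum_scal, <- rsum_plus. apply rsum_ext; intros; ring. }
  assert (Y1 : 2 * dot d u y <= eta * n2 d u + n2 d y / eta) by (apply young; auto).
  assert (Y2 : - (n2 d u + n) <= 2 * dot d u x).
  { pose proof (n2_nonneg d (fun k => 1 * u k + 1 * x k)). rewrite n2_lin in H. fold n in H. lra. }
  assert (Y3 : n2 d w <= 2 * n2 d y + 2 * c * c * n).
  { pose proof (n2_nonneg d (fun k => 1 * y k + (- c) * x k)) as H1. rewrite n2_lin in H1.
    pose proof (n2_nonneg d (fun k => 1 * y k + c * x k)) as H2. rewrite n2_lin in H2.
    assert (n2 d w = n2 d (fun k => 1 * y k + (- c) * x k)).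
    { unfold n2, dot, y. apply rsum_ext; intros; ring. }
    rewrite H. rewrite n2_lin. fold n in H1, H2 |- *. lra. }
  assert (Y4 : n2 d u <= a * a * n).
  { pose proof (n2_mv d A x). fold u n in H. rewrite <- frob_sq in H.
    pose proof (frob_nonneg d A). assert (frob d d A * frob d d A <= a * a) by nra. nra. }
  assert (Y5 : n2 d y <= M * (quad d x E + c * n)).
  { apply psd_cs; auto. lra. }
  set (hv := quad d x E + c * n) in *.
  assert (Y6 : n2 d y <= M * (eps / (8 * K * M) * n)).
  { eapply Rle_trans. apply Y5. apply Rmult_le_compat_l; lra. }
  assert (Y7 : M * (eps / (8 * K * M) * n) = eps * n / (8*K)) by (field; lra).
  rewrite Y7 in Y6.
  assert (Hc0 : 0 <= c) by lra.
  assert (Z1 : - 2 * dot d u w >= - (eta * n2 d u + n2 d y / eta) - c * (n2 d u + n)).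
  { assert (2 * c * dot d u x >= - c * (n2 d u + n)) by nra. nra. }
  assert (Z2 : - (1/lam) * n2 d w >= - (2 * n2 d y + 2*c*c*n) / lam).
  { assert (0 < 1/lam) by (apply Rdiv_lt_0_compat; lra).
    replace (- (2 * n2 d y + 2*c*c*n) / lam) with (- (1/lam) * (2 * n2 d y + 2*c*c*n)) by (field; lra). nra. }
  assert (Z3 : eta * n2 d u <= eta * (a*a) * n) by nra.
  assert (Z4 : eta * (a*a) <= eps / 8).
  { unfold eta. apply Rmult_le_reg_r with (8 * (a*a+1)). nra.
    replace (eps / (8 * (a * a + 1)) * (a * a) * (8 * (a * a + 1))) with (eps * (a*a)) by (field; nra).
    replace (eps / 8 * (8 * (a * a + 1))) with (eps * (a*a) + eps) by field. lra. }
  assert (Z5 : n2 d y / eta + 2 * n2 d y / lam = K * n2 d y) by (unfold K; field; lra).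
  assert (Z6 : K * n2 d y <= eps * n / 8).
  { apply Rmult_le_compat_l with (r := K) in Y6; [|lra].
    replace (K * (eps * n / (8 * K))) with (eps * n / 8) in Y6 by (field; lra). lra. }
  assert (Z7 : c * (n2 d u + n) <= c * (a*a+1) * n) by nra.
  assert (Z8 : 2*c*c*n / lam <= c * n / 2).
  { apply Rmult_le_reg_r with lam; auto. replace (2*c*c*n/lam*lam) with (2*c*c*n) by (field; lra).
    assert (0 <= c*n) by nra. nra. }
  assert (Z9 : eps * n <= c * n) by nra.
  assert (Z10 : - (2 * n2 d y + 2*c*c*n) / lam = - (2 * n2 d y / lam) - 2*c*c*n/lam) by (field; lra).
  assert (Z11 : eta * (a*a) * n <= eps / 8 * n) by nra.
  nra.
Qed.

Lemma cpt_eps f x : continuity_pt f x -> forall eps, 0 < eps ->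
  exists delta, 0 < delta /\ forall y, Rabs (y - x) < delta -> Rabs (f y - f x) < eps.
Proof.
  intros H eps He. destruct (H eps He) as [al [Hal Hy]]. exists al; split; auto.
  intros y Hyx. destruct (Req_dec y x). subst. rewrite Rminus_diag, Rabs_R0; auto.
  apply (Hy y). split; [split; [exact I| auto]| auto].
Qed.

Lemma fsq_cont_gen d (M : R -> Mat) c : (forall i j, (i<d)%nat -> (j<d)%nat -> continuity_pt (fun r => M r i j) c) ->
  continuity_pt (fun r => fsq d (M r)) c.
Proof.
  intros H. unfold fsq. apply (rsum_cont d (fun i r => rsum d (fun j => M r i j ^ 2))).
  intros i Hi. apply (rsum_cont d (fun j r => M r i j ^ 2)). intros j Hj.
  apply (continuity_pt_ext (fun r => M r i j * M r i j)). intros; ring.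
  apply continuity_pt_mult; auto.
Qed.

Lemma quad_cont d x (M : R -> Mat) c : (forall i j, (i<d)%nat -> (j<d)%nat -> continuity_pt (fun r => M r i j) c) ->
  continuity_pt (fun r => quad d x (M r)) c.
Proof.
  intros H. unfold quad. apply (rsum_cont d (fun i r => rsum d (fun j => x i * M r i j * x j))).
  intros i Hi. apply (rsum_cont d (fun j r => x i * M r i j * x j)). intros j Hj.
  apply continuity_pt_mult. apply continuity_pt_mult. apply continuity_pt_const; intros ? ?; auto. auto.
  apply continuity_pt_const; intros ? ?; auto.
Qed.

Lemma quad_deriv d x (M : R -> Mat) L c : (forall i j, (i<d)%nat -> (j<d)%nat -> derivable_pt_lim (fun r => M r i j) c (L i j)) ->
  derivable_pt_lim (fun r => quad d x (M r)) c (quad d x L).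
Proof.
  intros H. unfold quad. apply (rsum_deriv d (fun i r => rsum d (fun j => x i * M r i j * x j))).
  intros i Hi. apply (rsum_deriv d (fun j r => x i * M r i j * x j)). intros j Hj.
  apply (derivable_pt_lim_ext (fun r => (x i * x j) * M r i j)). intros; ring.
  replace (x i * L i j * x j) with ((x i * x j) * L i j) by ring. apply derivable_pt_lim_scal. auto.
Qed.

Lemma quad_msub d x P R : quad d x (msub P R) = quad d x P - quad d x R.
Proof. unfold msub. apply quad_minus. Qed.

Lemma fsq_msub_self n X : fsq n (msub X X) = 0.
Proof. unfold fsq, msub. apply rsum_zero; intros; apply rsum_zero; intros. ring. Qed.

Lemma frob_lt n M y : fsq n M < y * y -> 0 < y -> frob n n M < y.
Proof.
  intros H Hy. rewrite frob_eq. rewrite <- (sqrt_square y) by lra. apply sqrt_lt_1_alt. split. apply fsq_nonneg. auto.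
Qed.

Lemma cf_deriv eps k s : derivable_pt_lim (fun r => eps * exp (k * r)) s (eps * (exp (k*s) * k)).
Proof.
  apply derivable_pt_lim_scal.
  apply (derivable_pt_lim_comp (fun r => k * r) exp s k (exp (k*s))).
  pose proof (derivable_pt_lim_scal id k s 1 (derivable_pt_lim_id s)) as H. rewrite Rmult_1_r in H. exact H.
  apply derivable_pt_lim_exp.
Qed.

Lemma clamp_cont a b c : a <= b -> continuity_pt (clamp a b) c.
Proof.
  intros Hab. apply (wcont_cpt a b (fun s => s) Hab).
  intros t Ht eps He. exists eps; split; auto.
Qed.

Lemma psd_eps d d' T lam C Q A E a B :
  0 < T -> 0 < lam -> sym_psd d Q -> riccati_sol d d' T lam C Q A E ->
  (forall t, 0 <= t <= T -> frob d d (A t) <= a /\ frob d d (E t) <= B) ->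
  (forall t, 0 <= t <= T -> forall i j, (i<d)%nat -> (j<d)%nat -> E t i j = E t j i) ->
  forall eps, 0 < eps -> eps * exp ((a*a+2)*T) <= lam/4 ->
  forall t, 0 <= t <= T -> forall x, 0 <= quad d x (E t) + eps * exp ((a*a+2)*t) * n2 d x.
Proof.
  intros HT Hl HQ S Hbd Hsym eps He Hsmall.
  assert (Ha : 0 <= a) by (destruct (Hbd 0 ltac:(lra)); pose proof (frob_nonneg d (A 0)); lra).
  assert (HB : 0 <= B) by (destruct (Hbd 0 ltac:(lra)); pose proof (frob_nonneg d (E 0)); lra).
  set (k := a*a+2).
  set (cf := fun s => eps * exp (k*s)).
  set (h := fun x s => quad d x (E s) + cf s * n2 d x).
  set (good := fun s => exists mu, 0 < mu /\ forall x, mu * n2 d x <= h x s).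
  assert (Hcf1 : forall s, 0 <= s <= T -> eps <= cf s <= lam/4).
  { intros s Hs. unfold cf. split.
    - assert (1 <= exp (k*s)) by (rewrite <- exp_0; apply exp_le; unfold k; nra). nra.
    - eapply Rle_trans; [|exact Hsmall]. apply Rmult_le_compat_l; [lra|]. apply exp_le. unfold k; nra. }
  assert (Hcfc : forall c, continuity_pt cf c).
  { intros. apply derivable_continuous_pt. eexists. apply cf_deriv. }
  assert (Hcont : forall x c, continuity_pt (fun r => h x (clamp 0 T r)) c).
  { intros x c. unfold h. apply continuity_pt_plus.
    apply (quad_cont d x (fun r => E (clamp 0 T r))). intros; eapply sol_cont; eauto.
    apply continuity_pt_mult. 2: apply continuity_pt_const; intros ? ?; auto.
    apply (continuity_pt_comp (clamp 0 T) cf). apply clamp_cont; lra. apply Hcfc. }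
  assert (Hder : forall x c, 0 < c < T -> derivable_pt_lim (h x) c
             (quad d x (riccati_rhs d d' lam C (A c) (E c)) + cf c * k * n2 d x)).
  { intros x c Hc. unfold h. apply derivable_pt_lim_plus.
    apply (quad_deriv d x E). intros; destruct S as [_ [_ S3]]; apply S3; auto.
    replace (cf c * k * n2 d x) with ((eps * (exp (k*c) * k)) * n2 d x + cf c * 0) by (unfold cf; ring).
    apply (derivable_pt_lim_mult cf (fun _ => n2 d x) c _ 0) . apply cf_deriv. apply derivable_pt_lim_const. }
  assert (F0 : good 0).
  { exists eps. split; auto. intros x. unfold h.
    replace (quad d x (E 0)) with (quad d x Q).
    2:{ unfold quad. apply rsum_ext; intros; apply rsum_ext; intros. destruct S as [S1 _]. rewrite S1; auto. }
    destruct HQ as [_ HQ2]. pose proof (HQ2 x). fold (quad d x Q) in H.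
    assert (cf 0 = eps) by (unfold cf; rewrite Rmult_0_r, exp_0; ring). rewrite H0. lra. }
  assert (Hquad_diff : forall x s s', h x s' = h x s + quad d x (msub (E s') (E s)) + (cf s' - cf s) * n2 d x).
  { intros. unfold h. rewrite quad_msub. ring. }
  assert (Hnear : forall s, 0 <= s <= T -> forall eta, 0 < eta -> exists delta, 0 < delta /\
     forall s', 0 <= s' <= T -> Rabs (s' - s) < delta -> forall x,
       Rabs (h x s' - h x s) <= eta * n2 d x).
  { intros s Hs eta Heta.
    assert (Hc1 : continuity_pt (fun r => fsq d (msub (E (clamp 0 T r)) (E s))) s).
    { apply (fsq_cont_gen d (fun r => msub (E (clamp 0 T r)) (E s))). intros i j Hi Hj. unfold msub.
      apply (continuity_pt_minus (fun r => E (clamp 0 T r) i j) (fun _ => E s i j)).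
      eapply sol_cont; eauto. apply continuity_pt_const; intros ? ?; auto. }
    destruct (cpt_eps _ _ Hc1 ((eta/2)*(eta/2))) as [d1 [Hd1 H1]]. nra.
    destruct (cpt_eps _ _ (Hcfc s) (eta/2)) as [d2 [Hd2 H2]]. lra.
    exists (Rmin d1 d2). split. apply Rmin_pos; auto.
    intros s' Hs' Hss x. 
    assert (Hm1 : Rabs (s' - s) < d1) by (eapply Rlt_le_trans; [exact Hss| apply Rmin_l]).
    assert (Hm2 : Rabs (s' - s) < d2) by (eapply Rlt_le_trans; [exact Hss| apply Rmin_r]).
    specialize (H1 s' Hm1). specialize (H2 s' Hm2).
    rewrite !clamp_id in H1 by auto. rewrite fsq_msub_self, Rminus_0_r in H1.
    pose proof (Rle_abs (fsq d (msub (E s') (E s)))).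
    assert (Hf : frob d d (msub (E s') (E s)) < eta/2) by (apply frob_lt; lra).
    rewrite (Hquad_diff x s s').
    replace (h x s + quad d x (msub (E s') (E s)) + (cf s' - cf s) * n2 d x - h x s) with
      (quad d x (msub (E s') (E s)) + (cf s' - cf s) * n2 d x) by ring.
    eapply Rle_trans. apply Rabs_triang. rewrite Rabs_mult.
    pose proof (quad_abs d x (msub (E s') (E s))). pose proof (n2_nonneg d x).
    rewrite (Rabs_right (n2 d x)) by lra.
    assert (Rabs (cf s' - cf s) * n2 d x <= eta/2 * n2 d x) by (apply Rmult_le_compat_r; lra).
    assert (frob d d (msub (E s') (E s)) * n2 d x <= eta/2 * n2 d x) by (apply Rmult_le_compat_r; lra).
    lra. }
  assert (Fopen : forall s, 0 <= s <= T -> good s -> exists delta, 0 < delta /\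
     forall s', 0 <= s' <= T -> Rabs (s' - s) < delta -> good s').
  { intros s Hs [mu [Hmu Hg]]. destruct (Hnear s Hs (mu/2)) as [dl [Hdl Hn]]. lra.
    exists dl; split; auto. intros s' Hs' Hss. exists (mu/2). split. lra. intros x.
    specialize (Hn s' Hs' Hss x). specialize (Hg x). apply abs_le_b in Hn. lra. }
  assert (Fcontra : forall t0, 0 < t0 <= T -> (forall s, 0 <= s < t0 -> good s) -> good t0).
  { intros t0 Ht0 Hbefore. apply NNPP. intros Hng.
    assert (Hx : forall mu, 0 < mu -> exists x, h x t0 < mu * n2 d x).
    { intros mu Hmu. apply NNPP; intros Hn. apply Hng. exists mu. split; auto. intros x.
      apply Rnot_lt_le. intros Hlt. apply Hn. exists x; auto. }
    set (M := B + lam/4).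
    assert (HM : 0 < M) by (unfold M; lra).
    set (rho := eps / (8 * (1 / (eps / (8 * (a*a+1))) + 2/lam) * M)).
    assert (Hrho : 0 < rho).
    { unfold rho. apply Rdiv_lt_0_compat; auto.
      assert (0 < eps / (8 * (a*a+1))) by (apply Rdiv_lt_0_compat; nra).
      assert (0 < 1 / (eps / (8 * (a*a+1)))) by (apply Rdiv_lt_0_compat; lra).
      assert (0 < 2/lam) by (apply Rdiv_lt_0_compat; lra).
      apply Rmult_lt_0_compat; [lra|auto]. }
    destruct (Hnear t0 ltac:(lra) (rho/2) ltac:(lra)) as [d1 [Hd1 Hn1]].
    set (del := Rmin (d1/2) t0).
    assert (Hdel : 0 < del) by (apply Rmin_pos; lra).
    assert (Hdel1 : del <= d1/2) by apply Rmin_l.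
    assert (Hdel2 : del <= t0) by apply Rmin_r.
    set (mu := Rmin (rho/2) (del*eps/8)).
    assert (Hmu : 0 < mu) by (apply Rmin_pos; [lra| apply Rdiv_lt_0_compat; nra]).
    destruct (Hx mu Hmu) as [x Hxl].
    assert (Hn0 : 0 <= n2 d x) by apply n2_nonneg.
    assert (Hnpos : 0 < n2 d x).
    { destruct Hn0 as [|Hz]; auto. exfalso.
      pose proof (quad_abs d x (E t0)) as Hq. rewrite <- Hz in Hq, Hxl.
      unfold h in Hxl. rewrite <- Hz in Hxl.
      rewrite Rmult_0_r in Hq, Hxl. rewrite Rmult_0_r, Rplus_0_r in Hxl.
      pose proof (Rle_abs (-(quad d x (E t0)))) as Hq2. rewrite Rabs_Ropp in Hq2. lra. }
    assert (Hclose : forall r, t0 - del <= r <= t0 -> h x r <= rho * n2 d x).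
    { intros r Hr. assert (Habs : Rabs (r - t0) < d1) by (rewrite Rabs_left1; lra).
      specialize (Hn1 r ltac:(lra) Habs x). apply abs_le_b in Hn1.
      assert (mu <= rho/2) by apply Rmin_l.
      assert (mu * n2 d x <= rho/2 * n2 d x) by (apply Rmult_le_compat_r; lra). lra. }
    assert (Hmono : (eps*n2 d x/4) * t0 - h x (clamp 0 T t0) <=
                    (eps*n2 d x/4) * (t0 - del) - h x (clamp 0 T (t0 - del))).
    { apply (mono (fun r => (eps*n2 d x/4) * r - h x (clamp 0 T r))
          (fun c => eps*n2 d x/4 * 1 - (quad d x (riccati_rhs d d' lam C (A c) (E c)) + cf c * k * n2 d x))). lra.
      - intros c _. apply continuity_pt_minus.
        apply (continuity_pt_scal id). apply derivable_continuous_pt, derivable_pt_id. apply Hcont.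
      - intros c Hc. apply derivable_pt_lim_minus.
        + apply (derivable_pt_lim_scal id). apply derivable_pt_lim_id.
        + apply (derivable_pt_lim_locally_ext (h x) _ c 0 T). lra. intros z Hz. rewrite clamp_id; auto; lra.
          replace (h x (clamp 0 T c)) with (h x c) by (rewrite clamp_id; auto; lra).
          apply Hder. lra.
      - intros c Hc.
        assert (Hc0 : 0 <= c < t0) by lra.
        destruct (Hbefore c Hc0) as [mu' [Hmu' Hg']].
        destruct (Hbd c ltac:(lra)) as [HAc HEc].
        destruct (Hcf1 c ltac:(lra)) as [Hce1 Hce2].
        assert (eps * n2 d x / 4 <= quad d x (riccati_rhs d d' lam C (A c) (E c)) + cf c * (a * a + 2) * n2 d x).
        { apply (deriv_bound d d' lam C (A c) (E c) x a M eps (cf c)); auto.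
          - intros; apply Hsym; auto; lra.
          - intros v. specialize (Hg' v). unfold h in Hg'. pose proof (n2_nonneg d v).
            assert (0 <= mu' * n2 d v) by (apply Rmult_le_pos; lra). lra.
          - intros v. pose proof (quad_abs d v (E c)) as Hq. pose proof (n2_nonneg d v).
            apply abs_le_b in Hq.
            assert (frob d d (E c) * n2 d v <= B * n2 d v) by (apply Rmult_le_compat_r; lra).
            assert (cf c * n2 d v <= lam/4 * n2 d v) by (apply Rmult_le_compat_r; lra).
            unfold M. lra.
          - specialize (Hclose c ltac:(lra)). unfold h in Hclose. exact Hclose. }
        unfold k. lra. }
    rewrite !clamp_id in Hmono by lra.
    destruct (Hbefore (t0 - del) ltac:(lra)) as [mu2 [Hmu2 Hg2]].
    specialize (Hg2 x).
    assert (0 <= mu2 * n2 d x) by (apply Rmult_le_pos; lra).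
    assert (mu <= del*eps/8) by apply Rmin_r.
    assert (mu*n2 d x <= del*eps/8*n2 d x) by (apply Rmult_le_compat_r; lra).
    assert (0 < del*eps*n2 d x) by (apply Rmult_lt_0_compat; [nra|lra]).
    assert (eps*n2 d x/4*(t0-del) = eps*n2 d x/4*t0 - del*eps*n2 d x/4) by field.
    assert (del*eps/8*n2 d x = del*eps*n2 d x/8) by field.
    lra. }
  assert (Fall : forall t, 0 <= t <= T -> good t).
  { set (Sset := fun t => 0 <= t <= T /\ forall s, 0 <= s <= t -> good s).
    assert (Hb : bound Sset) by (exists T; intros y [Hy _]; lra).
    assert (He0 : exists y, Sset y) by (exists 0; split; [lra| intros s Hs; replace s with 0 by lra; auto]).
    destruct (completeness Sset Hb He0) as [t0 [Hub Hlub]].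
    assert (Ht00 : 0 <= t0) by (apply Hub; split; [lra| intros s Hs; replace s with 0 by lra; auto]).
    assert (Ht0T : t0 <= T) by (apply Hlub; intros y [Hy _]; lra).
    assert (Hbef : forall s, 0 <= s < t0 -> good s).
    { intros s Hs. apply NNPP; intros Hng.
      assert (is_upper_bound Sset s).
      { intros y [Hy Hg]. apply Rnot_lt_le. intros Hlt. apply Hng. apply Hg. lra. }
      specialize (Hlub s H). lra. }
    assert (Hg0 : good t0).
    { destruct (Req_dec t0 0) as [H0|H0]. rewrite H0; auto. apply Fcontra; auto. lra. }
    assert (HT0 : t0 = T).
    { apply Rle_antisym; auto. apply Rnot_lt_le; intros Hlt.
      destruct (Fopen t0 ltac:(lra) Hg0) as [dl [Hdl Hop]].
      set (t1 := Rmin (t0 + dl/2) T).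
      assert (Ht1a : t1 <= t0 + dl/2) by apply Rmin_l.
      assert (Ht1b : t1 <= T) by apply Rmin_r.
      assert (Ht1c : t0 < t1) by (apply Rmin_glb_lt; lra).
      assert (Sset t1).
      { split. lra.
        intros s Hs. destruct (Rlt_or_le s t0). apply Hbef; lra.
        apply Hop. lra. rewrite Rabs_right; lra. }
      specialize (Hub t1 H). lra. }
    intros t Ht. destruct (Rlt_or_le t t0). apply Hbef; lra. replace t with t0 by lra. auto. }
  intros t Ht x. destruct (Fall t Ht) as [mu [Hmu Hg]]. specialize (Hg x). unfold h, cf, k in Hg. cbv beta in Hg.
  pose proof (n2_nonneg d x). assert (0 <= mu * n2 d x) by (apply Rmult_le_pos; lra). unfold k. lra.
Qed.

Lemma sol_psd d d' T lam C Q A E a B :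
  0 < T -> 0 < lam -> sym_psd d Q -> riccati_sol d d' T lam C Q A E ->
  (forall t, 0 <= t <= T -> frob d d (A t) <= a /\ frob d d (E t) <= B) ->
  (forall t, 0 <= t <= T -> forall i j, (i<d)%nat -> (j<d)%nat -> E t i j = E t j i) ->
  forall t, 0 <= t <= T -> forall x, 0 <= quad d x (E t).
Proof.
  intros HT Hl HQ S Hbd Hsym t Ht x.
  apply Rnot_lt_le. intros Hq.
  set (q := quad d x (E t)) in *.
  set (K := exp ((a*a+2)*T)).
  assert (HK : 0 < K) by apply exp_pos.
  set (n := n2 d x).
  assert (Hn : 0 <= n) by apply n2_nonneg.
  set (eps := Rmin (lam/4/K) ((-q)/(2*K*(n+1)))).
  assert (He : 0 < eps).
  { apply Rmin_pos. apply Rdiv_lt_0_compat; lra. apply Rdiv_lt_0_compat. lra.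
    apply Rmult_lt_0_compat; lra. }
  assert (He1 : eps * K <= lam/4).
  { assert (eps <= lam/4/K) by apply Rmin_l. apply Rmult_le_compat_r with (r:=K) in H; [|lra].
    replace (lam/4/K*K) with (lam/4) in H by (field; lra). auto. }
  pose proof (psd_eps d d' T lam C Q A E a B HT Hl HQ S Hbd Hsym eps He He1 t Ht x) as H.
  fold q n in H.
  assert (exp ((a*a+2)*t) <= K) by (apply exp_le; nra).
  assert (eps <= (-q)/(2*K*(n+1))) by apply Rmin_r.
  assert (eps * exp ((a*a+2)*t) * n <= eps * K * (n+1)).
  { assert (exp ((a*a+2)*t) * n <= K * (n+1)).
    { apply Rle_trans with (K*n). apply Rmult_le_compat_r; lra. apply Rmult_le_compat_l; lra. }
    rewrite Rmult_assoc, Rmult_assoc. apply Rmult_le_compat_l; lra. }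
  assert (eps * K * (n+1) <= (-q)/2).
  { apply Rmult_le_compat_r with (r := K*(n+1)) in H1; [|nra].
    replace (- q / (2 * K * (n + 1)) * (K * (n + 1))) with (-q/2) in H1 by (field; nra). nra. }
  lra.
Qed.

Lemma fsq_deriv_gen d (M : R -> Mat) L c :
  (forall i j, (i<d)%nat -> (j<d)%nat -> derivable_pt_lim (fun r => M r i j) c (L i j)) ->
  derivable_pt_lim (fun r => fsq d (M r)) c (2 * fip d (M c) L).
Proof.
  intros H. unfold fip. rewrite <- rsum_scal.
  replace (rsum d (fun k => 2 * rsum d (fun j => M c k j * L k j))) with
    (rsum d (fun i => rsum d (fun j => 2 * M c i j * L i j))).
  2:{ apply rsum_ext; intros. rewrite <- rsum_scal. apply rsum_ext; intros; ring. }
  unfold fsq. apply (rsum_deriv d (fun i r => rsum d (fun j => M r i j ^ 2))).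
  intros i Hi. apply (rsum_deriv d (fun j r => M r i j ^ 2)). intros j Hj.
  apply (sq_deriv (fun r => M r i j)). auto.
Qed.

Lemma fip_rhs d d' lam C A E M :
  fip d M (riccati_rhs d d' lam C A E) = fip d M (mmul d' (trn C) C) - fip d M (mmul d (trn A) E)
   - fip d M (mmul d E A) - (1/lam) * fip d M (mmul d E E).
Proof.
  unfold riccati_rhs, msub at 1, mscal.
  rewrite fip_minus, fip_scal. unfold msub at 1. rewrite fip_minus. unfold msub. rewrite fip_minus. reflexivity.
Qed.

Lemma fip_EEE d E : fip d E (mmul d E E) = rsum d (fun j => quad d (fun i => E i j) E).
Proof.
  unfold fip, mmul, quad.
  transitivity (rsum d (fun i => rsum d (fun j => rsum d (fun k => E i j * E i k * E k j)))).
  { apply rsum_ext; intros; apply rsum_ext; intros. rewrite <- rsum_scal. apply rsum_ext; intros; ring. }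
  rewrite rsum_swap. apply rsum_ext; intros. apply rsum_ext; intros. apply rsum_ext; intros. ring.
Qed.

Lemma sol_bound d d' T lam C Q A E a B :
  0 < T -> 0 < lam -> sym_psd d Q -> riccati_sol d d' T lam C Q A E ->
  (forall t, 0 <= t <= T -> frob d d (A t) <= a /\ frob d d (E t) <= B) ->
  forall t, 0 <= t <= T ->
  fsq d (E t) <= (fsq d Q + frob d d (mmul d' (trn C) C) * frob d d (mmul d' (trn C) C)) * exp ((4*a+1)*T).
Proof.
  intros HT Hl HQ S Hbd t Ht.
  assert (Ha : 0 <= a) by (destruct (Hbd 0 ltac:(lra)); pose proof (frob_nonneg d (A 0)); lra).
  assert (HB : 0 <= B) by (destruct (Hbd 0 ltac:(lra)); pose proof (frob_nonneg d (E 0)); lra).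
  assert (Hsym := sol_sym d d' T lam C Q A E a B HT Hl HB HQ S Hbd).
  assert (Hpsd := sol_psd d d' T lam C Q A E a B HT Hl HQ S Hbd Hsym).
  set (ga := frob d d (mmul d' (trn C) C)).
  assert (Hga : 0 <= ga) by apply frob_nonneg.
  set (ka := 4*a+1).
  set (f := fun s => fsq d (E s)).
  set (W := fun s => (f (clamp 0 T s) + ga*ga) * exp (-(ka*s))).
  assert (HW : W t <= W 0).
  { apply (mono W (fun c => (2 * fip d (E c) (riccati_rhs d d' lam C (A c) (E c)) + 0) * exp (-(ka*c))
            + (f c + ga*ga) * (exp (-(ka*c)) * (-ka)))); try lra.
    - intros c _. unfold W. apply continuity_pt_mult. apply continuity_pt_plus.
      apply (fsq_cont_gen d (fun r => E (clamp 0 T r))). intros; eapply sol_cont; eauto.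
      apply continuity_pt_const; intros ? ?; auto.
      apply derivable_continuous_pt. eexists. apply exp_deriv.
    - intros c Hc. unfold W.
      replace (f c) with (f (clamp 0 T c)) by (rewrite clamp_id; auto; lra).
      apply (derivable_pt_lim_mult (fun s => f (clamp 0 T s) + ga*ga) (fun s => exp (-(ka*s)))).
      2: apply exp_deriv.
      apply (derivable_pt_lim_plus (fun s => f (clamp 0 T s)) (fun _ => ga*ga)).
      2: apply derivable_pt_lim_const.
      apply (derivable_pt_lim_locally_ext f _ c 0 T). lra. intros z Hz. rewrite clamp_id; auto; lra.
      unfold f. apply (fsq_deriv_gen d E). intros; destruct S as [_ [_ S3]]; apply S3; auto; lra.
    - intros c Hc. destruct (Hbd c ltac:(lra)) as [HAc HEc].
      rewrite fip_rhs.
      pose proof (fip_abs d (E c) (mmul d' (trn C) C)) as X1. fold ga in X1.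
      pose proof (fip_mmul_bound d (E c) (trn (A c)) (E c)) as X2. rewrite frob_trn in X2.
      pose proof (fip_mmul_bound d (E c) (E c) (A c)) as X3.
      assert (X4 : 0 <= fip d (E c) (mmul d (E c) (E c))).
      { rewrite fip_EEE. apply rsum_nonneg; intros. apply Hpsd. lra. }
      assert (Hf : f c = frob d d (E c) * frob d d (E c)) by (unfold f; rewrite frob_sq; auto).
      set (fe := frob d d (E c)) in *. set (fa := frob d d (A c)) in *.
      assert (0 <= fe) by apply frob_nonneg. assert (0 <= fa) by apply frob_nonneg.
      apply abs_le_b in X1. apply abs_le_b in X2. apply abs_le_b in X3.
      assert (fe * (fa * fe) <= a * (fe*fe)) by nra.
      assert (fe * (fe * fa) <= a * (fe*fe)) by nra.
      assert (2*fe*ga <= fe*fe + ga*ga) by (pose proof (pow2_ge_0 (fe - ga)); nra).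
      assert (0 <= 1/lam * fip d (E c) (mmul d (E c) (E c))) by (apply Rmult_le_pos; [apply Rlt_le, Rdiv_lt_0_compat; lra| auto]).
      set (e := exp (-(ka*c))).
      assert (0 < e) by apply exp_pos.
      set (F := 2 * (fip d (E c) (mmul d' (trn C) C) - fip d (E c) (mmul d (trn (A c)) (E c)) -
        fip d (E c) (mmul d (E c) (A c)) - 1 / lam * fip d (E c) (mmul d (E c) (E c)))).
      assert (F <= ka * f c + ga * ga) by (unfold F, ka; rewrite Hf; lra).
      assert ((F - ka * f c - ka*(ga*ga)) * e <= 0).
      { apply Rmult_le_0_r; [|lra]. assert (ga*ga <= ka*(ga*ga)) by (unfold ka; nra). lra. }
      nra. }
  unfold W in HW. rewrite !clamp_id in HW by lra.
  replace (-(ka*0)) with 0 in HW by ring. rewrite exp_0, Rmult_1_r in HW.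
  assert (Hf0 : f 0 = fsq d Q).
  { unfold f, fsq. apply rsum_ext; intros; apply rsum_ext; intros. destruct S as [S1 _]. rewrite S1; auto. }
  rewrite Hf0 in HW.
  assert (Hee : exp (-(ka*t)) * exp (ka*t) = 1) by (rewrite <- exp_plus; replace (-(ka*t) + ka*t) with 0 by ring; apply exp_0).
  assert (Hk : exp (ka*t) <= exp (ka*T)) by (apply exp_le; unfold ka; nra).
  assert (H0 : 0 <= fsq d Q + ga*ga) by (pose proof (fsq_nonneg d Q); nra).
  assert (f t + ga*ga <= (fsq d Q + ga*ga) * exp (ka*t)).
  { replace (f t + ga*ga) with ((f t + ga*ga) * exp (-(ka*t)) * exp (ka*t)) by (rewrite Rmult_assoc, Hee; ring).
    apply Rmult_le_compat_r; [left; apply exp_pos|auto]. }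
  fold (f t). assert ((fsq d Q + ga*ga) * exp (ka*t) <= (fsq d Q + ga*ga) * exp (ka*T)) by (apply Rmult_le_compat_l; auto).
  assert (0 <= ga*ga) by nra. unfold ka in *. lra.
Qed.

Lemma vnorm_n2 p u : vnorm p u = sqrt (n2 p u).
Proof. unfold vnorm, n2, dot. f_equal. apply rsum_ext; intros; ring. Qed.

Lemma vdist_self p x : vdist p x x = 0.
Proof. unfold vdist. rewrite vnorm_n2. rewrite <- sqrt_0. f_equal. unfold n2, dot. apply rsum_zero; intros; ring. Qed.

Lemma vdist_sym p x y : vdist p x y = vdist p y x.
Proof. unfold vdist. rewrite !vnorm_n2. f_equal. unfold n2, dot. apply rsum_ext; intros; ring. Qed.

Lemma vnorm_triang p u v : vnorm p (fun k => u k + v k) <= vnorm p u + vnorm p v.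
Proof.
  rewrite !vnorm_n2.
  pose proof (sqrt_pos (n2 p u)). pose proof (sqrt_pos (n2 p v)).
  rewrite <- (sqrt_square (sqrt (n2 p u) + sqrt (n2 p v))) by lra.
  apply sqrt_le_1_alt.
  replace (n2 p (fun k => u k + v k)) with (n2 p (fun k => 1 * u k + 1 * v k)) by (unfold n2, dot; apply rsum_ext; intros; ring).
  rewrite n2_lin.
  pose proof (dot_abs p u v). apply abs_le_b in H1.
  pose proof (sqrt_sqrt (n2 p u) (n2_nonneg p u)). pose proof (sqrt_sqrt (n2 p v) (n2_nonneg p v)).
  nra.
Qed.

Lemma vdist_triang p x y z : vdist p x z <= vdist p x y + vdist p y z.
Proof.
  unfold vdist. replace (vnorm p (fun k => x k - z k)) with (vnorm p (fun k => (x k - y k) + (y k - z k)))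
    by (rewrite !vnorm_n2; f_equal; unfold n2, dot; apply rsum_ext; intros; ring).
  apply vnorm_triang.
Qed.

Lemma fin_max n (P : nat -> R -> Prop) : (forall i, (i<n)%nat -> exists b, P i b) ->
  (forall i b b', P i b -> b <= b' -> P i b') -> exists b, forall i, (i<n)%nat -> P i b.
Proof.
  intros H Hm. induction n.
  - exists 0. intros; lia.
  - destruct IHn as [b1 Hb1]. intros; apply H; lia.
    destruct (H n ltac:(lia)) as [b2 Hb2]. exists (Rmax b1 b2). intros i Hi.
    destruct (Nat.eq_dec i n). subst. eapply Hm; eauto. apply Rmax_r.
    eapply Hm. apply Hb1; lia. apply Rmax_l.
Qed.

Lemma fin_min n (P : nat -> R -> Prop) : (forall i, (i<n)%nat -> exists b, 0 < b /\ P i b) ->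
  (forall i b b', P i b -> 0 < b' <= b -> P i b') -> exists b, 0 < b /\ forall i, (i<n)%nat -> P i b.
Proof.
  intros H Hm. induction n.
  - exists 1. split. lra. intros; lia.
  - destruct IHn as [b1 [Hb0 Hb1]]. intros; apply H; lia.
    destruct (H n ltac:(lia)) as [b2 [Hb20 Hb2]]. exists (Rmin b1 b2). split. apply Rmin_pos; auto. intros i Hi.
    destruct (Nat.eq_dec i n). subst. eapply Hm; eauto. split. apply Rmin_pos; auto. apply Rmin_r.
    eapply Hm. apply Hb1; lia. split. apply Rmin_pos; auto. apply Rmin_l.
Qed.

Lemma fold_max_ge {X} (b : X -> R) l i : In i l -> b i <= fold_right (fun j acc => Rmax (b j) acc) 0 l.
Proof.
  induction l; simpl; intros H. contradiction. destruct H. subst. apply Rmax_l.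
  eapply Rle_trans. apply IHl; auto. apply Rmax_r.
Qed.

Lemma tube d p T Th A th0 : 0 < T -> A_cont d p T Th A -> Th th0 ->
  exists r b, 0 < r /\ forall th, Th th -> vdist p th0 th < r -> forall t, 0 <= t <= T ->
    forall i j, (i<d)%nat -> (j<d)%nat -> Rabs (A th t i j) <= b.
Proof.
  intros HT HA Hth0.
  assert (Hb0 : exists b, forall i, (i<d)%nat -> forall j, (j<d)%nat -> forall t, 0 <= t <= T -> Rabs (A th0 t i j) <= b).
  { apply (fin_max d (fun i b => forall j, (j<d)%nat -> forall t, 0 <= t <= T -> Rabs (A th0 t i j) <= b)).
    2:{ intros; eapply Rle_trans; eauto. }
    intros i Hi. apply (fin_max d (fun j b => forall t, 0 <= t <= T -> Rabs (A th0 t i j) <= b)).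
    2:{ intros; eapply Rle_trans; eauto. }
    intros j Hj.
    assert (Hc : forall c, continuity_pt (fun s => Rabs (A th0 (clamp 0 T s) i j)) c).
    { intros c. apply (continuity_pt_comp (fun s => A th0 (clamp 0 T s) i j) Rabs).
      apply (wcont_cpt 0 T (fun s => A th0 s i j)). lra.
      intros t Ht eps He. destruct (HA i j Hi Hj t th0 Ht Hth0 eps He) as [dl [Hdl Hs]].
      exists dl. split; auto. intros s Hs1 Hs2. apply Hs; auto. rewrite vdist_self; auto.
      apply Rcontinuity_abs. }
    destruct (continuity_ab_maj _ 0 T ltac:(lra) (fun c _ => Hc c)) as [Mx [HMx _]].
    eexists. intros t Ht. specialize (HMx t Ht). rewrite clamp_id in HMx by auto. exact HMx. }
  destruct Hb0 as [b0 Hb0].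
  assert (Hdl : forall t, exists dl : posreal, 0 <= t <= T -> forall th, Th th -> vdist p th0 th < dl ->
      forall s, 0 <= s <= T -> Rabs (s - t) < dl -> forall i j, (i<d)%nat -> (j<d)%nat ->
      Rabs (A th s i j - A th0 t i j) < 1).
  { intros t. destruct (Rle_dec 0 t) as [H1|H1]; [destruct (Rle_dec t T) as [H2|H2]|].
    2,3: exists (mkposreal 1 Rlt_0_1); intros; lra.
    assert (exists dl, 0 < dl /\ forall i, (i<d)%nat -> forall j, (j<d)%nat -> forall th, Th th -> vdist p th0 th < dl ->
      forall s, 0 <= s <= T -> Rabs (s - t) < dl -> Rabs (A th s i j - A th0 t i j) < 1) as [dl [Hdl0 Hdl]].
    { apply (fin_min d (fun i dl => forall j, (j<d)%nat -> forall th, Th th -> vdist p th0 th < dl ->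
      forall s, 0 <= s <= T -> Rabs (s - t) < dl -> Rabs (A th s i j - A th0 t i j) < 1)).
      2:{ intros i b b' Hb Hb'. intros. apply Hb; auto; lra. }
      intros i Hi. apply (fin_min d (fun j dl => forall th, Th th -> vdist p th0 th < dl ->
        forall s, 0 <= s <= T -> Rabs (s - t) < dl -> Rabs (A th s i j - A th0 t i j) < 1)).
      2:{ intros j b b' Hb Hb'. intros. apply Hb; auto; lra. }
      intros j Hj. destruct (HA i j Hi Hj t th0 ltac:(lra) Hth0 1 Rlt_0_1) as [dl [Hdl Hs]].
      exists dl. split; [auto| intros; apply Hs; auto]. }
    exists (mkposreal dl Hdl0). simpl. intros _ th Hth Hv s Hs Hst i j Hi Hj. apply Hdl; auto. }
  set (delta := fun t => proj1_sig (constructive_indefinite_description _ (Hdl t))).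
  assert (Hdelta : forall t, 0 <= t <= T -> forall th, Th th -> vdist p th0 th < delta t ->
      forall s, 0 <= s <= T -> Rabs (s - t) < delta t -> forall i j, (i<d)%nat -> (j<d)%nat ->
      Rabs (A th s i j - A th0 t i j) < 1).
  { intros t. unfold delta. destruct (constructive_indefinite_description _ (Hdl t)). simpl. auto. }
  destruct (compactness_value_1d 0 T delta) as [r Hr].
  exists r, (b0 + 1). split. apply cond_pos.
  intros th Hth Hv s Hs i j Hi Hj.
  apply NNPP. intros Hn. apply (Hr s Hs). intros [t [Ht [Hst Hrt]]]. apply Hn.
  assert (Rabs (A th s i j - A th0 t i j) < 1).
  { apply Hdelta; auto. lra. }
  pose proof (Hb0 i Hi j Hj t Ht).
  pose proof (Rabs_triang_inv (A th s i j) (A th0 t i j)). lra.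
Qed.

Lemma A_bound d p T Th A : 0 < T -> compact_p p Th -> A_cont d p T Th A ->
  exists a, forall th, Th th -> forall t, 0 <= t <= T -> frob d d (A th t) <= a.
Proof.
  intros HT HC HA.
  assert (Hrb : forall th0, exists rb : R*R, Th th0 -> 0 < fst rb /\ forall th, Th th -> vdist p th0 th < fst rb ->
     forall t, 0 <= t <= T -> forall i j, (i<d)%nat -> (j<d)%nat -> Rabs (A th t i j) <= snd rb).
  { intros th0. destruct (classic (Th th0)) as [Hth|Hth].
    - destruct (tube d p T Th A th0 HT HA Hth) as [r [b [Hr Hb]]]. exists (r, b). intros _. simpl. auto.
    - exists (1, 0). intros; contradiction. }
  set (rb := fun th0 => proj1_sig (constructive_indefinite_description _ (Hrb th0))).
  assert (Hrb2 : forall th0, Th th0 -> 0 < fst (rb th0) /\ forall th, Th th -> vdist p th0 th < fst (rb th0) ->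
     forall t, 0 <= t <= T -> forall i j, (i<d)%nat -> (j<d)%nat -> Rabs (A th t i j) <= snd (rb th0)).
  { intros th0. unfold rb. destruct (constructive_indefinite_description _ (Hrb th0)). simpl. auto. }
  destruct (HC vec (fun th0 x => Th th0 /\ vdist p th0 x < fst (rb th0))) as [l Hl].
  - intros i x [Hi Hx]. exists (fst (rb i) - vdist p i x). split. lra.
    intros y Hy. split; auto. pose proof (vdist_triang p i x y). lra.
  - intros x Hx. exists x. split; auto. rewrite vdist_self. apply Hrb2; auto.
  - set (b := fold_right (fun j acc => Rmax (snd (rb j)) acc) 0 l).
    exists (sqrt (rsum d (fun _ => rsum d (fun _ => b*b)))).
    intros th Hth t Ht. destruct (Hl th Hth) as [i [Hin [Hi Hv]]].
    destruct (Hrb2 i Hi) as [_ Hbd].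
    rewrite frob_eq. apply sqrt_le_1_alt. unfold fsq. apply rsum_le; intros i' Hi'. apply rsum_le; intros j' Hj'.
    pose proof (Hbd th Hth Hv t Ht i' j' Hi' Hj').
    pose proof (fold_max_ge (fun j => snd (rb j)) l i Hin). unfold b.
    pose proof (Rabs_pos (A th t i' j')). rewrite <- pow2_abs. simpl. rewrite Rmult_1_r. apply Rmult_le_compat; lra.
Qed.

Theorem mainTheorem11
  (d d' p : nat) (T : R) (C Q : Mat) (Th : vec -> Prop) (A : vec -> R -> Mat)
  (HT : 0 < T)
  (HQ : sym_psd d Q)
  (HC1 : compact_p p Th)
  (HC3 : A_cont d p T Th A)
  (HLip : A_L2_lipschitz d p T Th A) :
  exists K1 K2 L1 : R, 0 < K1 /\ 0 < K2 /\ 0 < L1 /\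
    forall (lam : R) (E : vec -> R -> Mat), 0 < lam ->
      (forall th, Th th -> riccati_sol d d' T lam C Q (A th) (E th)) ->
      forall Ebar : R,
        is_lub (fun r => exists t th, 0 <= t <= T /\ Th th /\
                                      r = frob d d (E th t)) Ebar ->
        (forall th th' t, Th th -> Th th' -> 0 <= t <= T ->
           frob d d (msub (E th t) (E th' t))
             <= K1 * Ebar * exp (L1 * Ebar / lam) * vdist p th th') /\
        Ebar <= K2 * exp (L1 / lam).
Proof.
  destruct (A_bound d p T Th A HT HC1 HC3) as [a Ha].
  destruct HLip as [L [HL0 HL]].
  set (ga := frob d d (mmul d' (trn C) C)).
  set (K2' := sqrt ((fsq d Q + ga * ga) * exp ((4*a+1)*T))).
  exists (2 * (L+1) * exp ((4*a+1)*T/2)), (K2' + 1), (2*T).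
  split. apply Rmult_lt_0_compat. lra. apply exp_pos.
  split. pose proof (sqrt_pos ((fsq d Q + ga * ga) * exp ((4*a+1)*T))). unfold K2'. lra.
  split. lra.
  intros lam E Hl Hsol Ebar [Hub Hlub].
  assert (HEb : forall th t, Th th -> 0 <= t <= T -> frob d d (E th t) <= Ebar).
  { intros th t Hth Ht. apply Hub. exists t, th. auto. }
  split.
  - intros th th' t Hth Hth' Ht.
    assert (HB : 0 <= Ebar) by (pose proof (HEb th 0 Hth ltac:(lra)); pose proof (frob_nonneg d (E th 0)); lra).
    set (g := fun s => (frob d d (msub (A th s) (A th' s)))^2).
    assert (Hg : wcont 0 T g).
    { intros s Hs eps He.
      assert (Hc : continuity_pt (fun r => fsq d (msub (A th (clamp 0 T r)) (A th' (clamp 0 T r)))) s).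
      { apply (fsq_cont_gen d (fun r => msub (A th (clamp 0 T r)) (A th' (clamp 0 T r)))).
        intros i j Hi Hj. unfold msub.
        apply (continuity_pt_minus (fun r => A th (clamp 0 T r) i j) (fun r => A th' (clamp 0 T r) i j)).
        - apply (wcont_cpt 0 T (fun r => A th r i j)). lra. intros t0 Ht0 e He0.
          destruct (HC3 i j Hi Hj t0 th Ht0 Hth e He0) as [dl [Hdl Hs']]. exists dl; split; auto.
          intros; apply Hs'; auto. rewrite vdist_self; auto.
        - apply (wcont_cpt 0 T (fun r => A th' r i j)). lra. intros t0 Ht0 e He0.
          destruct (HC3 i j Hi Hj t0 th' Ht0 Hth' e He0) as [dl [Hdl Hs']]. exists dl; split; auto.
          intros; apply Hs'; auto. rewrite vdist_self; auto. }
      destruct (cpt_eps _ _ Hc eps He) as [dl [Hdl Hd]]. exists dl; split; auto.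
      intros s' Hs' Hss. specialize (Hd s' Hss). rewrite !clamp_id in Hd by auto.
      assert (Hgr : forall r, g r = fsq d (msub (A th r) (A th' r))) by (intros; unfold g; rewrite <- frob_sq; ring).
      rewrite !Hgr. auto. }
    pose proof (diff_est d d' T lam C Q (A th) (A th') (E th) (E th') a Ebar HT Hl HB (Hsol th Hth) (Hsol th' Hth')) as DE.
    assert (Hu := DE (fun s Hs => conj (Ha th Hth s Hs) (conj (Ha th' Hth' s Hs) (conj (HEb th s Hth Hs) (HEb th' s Hth' Hs)))) Hg t Ht).
    destruct (HL th th' Hth Hth') as [pr Hpr].
    rewrite (RInt_Reals _ _ _ pr) in Hu.
    set (I := RiemannInt pr) in *.
    set (vd := vdist p th th') in *.
    assert (Hvd : 0 <= vd) by apply sqrt_pos.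
    assert (HI : I <= (L*vd)*(L*vd)).
    { destruct (Rlt_or_le I 0). assert (0 <= (L*vd)*(L*vd)) by nra. lra.
      rewrite <- (sqrt_sqrt I) by auto. pose proof (sqrt_pos I). apply Rmult_le_compat; auto. }
    set (ka := 4 * a + 1 + 4 * Ebar / lam) in *.
    assert (Hk : exp (ka*T) = exp (ka*T/2) * exp (ka*T/2)) by (rewrite <- exp_plus; f_equal; field).
    assert (He2 : 0 < exp (ka*T/2)) by apply exp_pos.
    set (X := 2 * Ebar * L * vd * exp (ka*T/2)).
    assert (HX : 0 <= X) by (unfold X; apply Rmult_le_pos; [|lra]; apply Rmult_le_pos; [|lra]; apply Rmult_le_pos; lra).
    assert (Hu2 : fsq d (msub (E th t) (E th' t)) <= X * X).
    { eapply Rle_trans. apply Hu. unfold X. rewrite Hk.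
      assert (0 <= 4 * Ebar * Ebar * (exp (ka * T / 2) * exp (ka * T / 2))) by
        (apply Rmult_le_pos; [nra| apply Rmult_le_pos; lra]).
      apply Rle_trans with (4 * Ebar * Ebar * (exp (ka * T / 2) * exp (ka * T / 2)) * ((L*vd)*(L*vd))).
      apply Rmult_le_compat_l; auto. right; ring. }
    assert (Hf : frob d d (msub (E th t) (E th' t)) <= X).
    { rewrite frob_eq. rewrite <- (sqrt_square X) by auto. apply sqrt_le_1_alt. auto. }
    eapply Rle_trans. apply Hf. unfold X.
    assert (Hsplit : exp (ka*T/2) = exp ((4*a+1)*T/2) * exp (2*T*Ebar/lam)).
    { rewrite <- exp_plus. f_equal. unfold ka. field. lra. }
    rewrite Hsplit.
    assert (0 <= Ebar * vd * exp ((4*a+1)*T/2) * exp (2*T*Ebar/lam)).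
    { apply Rmult_le_pos; [|left; apply exp_pos]. apply Rmult_le_pos; [|left; apply exp_pos]. nra. }
    assert (2 * Ebar * L * vd * (exp ((4 * a + 1) * T / 2) * exp (2 * T * Ebar / lam)) =
            2 * L * (Ebar * vd * exp ((4*a+1)*T/2) * exp (2*T*Ebar/lam))) by ring.
    assert (2 * (L + 1) * exp ((4 * a + 1) * T / 2) * Ebar * exp (2 * T * Ebar / lam) * vd =
            2 * (L+1) * (Ebar * vd * exp ((4*a+1)*T/2) * exp (2*T*Ebar/lam))) by ring.
    nra.
  - assert (HK : Ebar <= K2').
    { apply Hlub. intros r [t [th [Ht [Hth Hr]]]]. subst r.
      rewrite frob_eq. unfold K2'. apply sqrt_le_1_alt.
      apply (sol_bound d d' T lam C Q (A th) (E th) a Ebar HT Hl HQ (Hsol th Hth)); auto. }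
    assert (1 <= exp (2*T/lam)).
    { rewrite <- exp_0. apply exp_le. apply Rlt_le, Rdiv_lt_0_compat; lra. }
    assert (0 <= K2') by apply sqrt_pos.
    nra.
Qed.
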